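(* Let $\beta>\beta_c$ and $0<\delta<\beta$. The function $T_\delta$ is $C^1$ on $(0,\infty)$; it is $C^2$ on $(0,q_\delta^{-1/2})\cup(q_\delta^{-1/2},\infty)$ if $0<\delta<\beta/2$ and $C^2$ on $(0,\infty)$ if $\beta/2\le\delta<\beta$. If $\delta\le\beta/2$ (in which case $q^*_\delta=0$), $T_\delta$ is strictly concave on $(0,\infty)$. If $\beta/2<\delta<\beta$ (in which case $q^*_\delta>0$), $T_\delta$ is strictly concave on $(0,(q_\delta^* )^{-1/2})$ and strictly convex on $((q_\delta^* )^{-1/2},\infty)$.
   Context: $\Gamma_\beta=\frac{e^{-\beta}+e^{-3\beta/2}}{1-e^{-\beta/2}}$, $\beta_c$ the unique positive solution of $\Gamma_\beta=1$. $c_\beta=\frac{1+e^{-\beta/2}}{1-e^{-\beta/2}}$, $\mathcal L(h)=\log\sum_{k\in\mathbb Z}e^{hk}e^{-\beta|k|/2}/c_\beta$ for $|h|<\beta/2$. $\mathcal G(h)=\int_0^1\mathcal L(h(x-\frac12))dx$, $\tilde h(q)$ the unique $h\in[0,\beta)$ with $\mathcal G'(h)=q$; $\mathcal H_\delta(s)=\int_0^1\mathcal L(sx+\delta-\frac\beta2)dx$ for $s\in(-\delta,\beta-\delta)$, $s_\delta(q)$ the unique solution of $\mathcal H_\delta'(s)=q$; $\delta_0(q)=\frac\beta2-\frac{\tilde h(q)}2$; $\psi(q,\delta)=\mathcal G(\tilde h(q))-q\tilde h(q)$ if $0\le\delta\le\delta_0(q)$, $\mathcal H_\delta(s_\delta(q))-qs_\delta(q)$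 if $\delta_0(q)<\delta<\beta$. $T_\delta(a)=a\log\Gamma_\beta+a\,\psi(1/a^2,\delta)$ for $a>0$. $q_\delta=\inf\{q>0:\delta>\delta_0(q)\}$ and $q^*_\delta=\inf\{q>0:\delta-\frac\beta2+s_\delta(q)\ge0\}$. *)

(* Defs.v *)
From Stdlib Require Import Reals Lra ZArith ClassicalEpsilon.
From Coquelicot Require Import Coquelicot.
Open Scope R_scope.

Definition Gamma (b : R) : R :=
  (exp (- b) + exp (- (3 * b / 2))) / (1 - exp (- (b / 2))).

Definition beta_c : R :=
  epsilon (inhabits 0) (fun b => 0 < b /\ Gamma b = 1).

Definition c_beta (b : R) : R :=
  (1 + exp (- (b / 2))) / (1 - exp (- (b / 2))).

Definition zsum (f : Z -> R) : R :=
  f 0%Z + Series (fun n : nat => f (Z.of_nat (S n)) + f (- Z.of_nat (S n))%Z).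

Definition Lf (b h : R) : R :=
  ln (zsum (fun k => exp (h * IZR k) * exp (- (b * Rabs (IZR k) / 2))) / c_beta b).

Definition Gf (b h : R) : R := RInt (fun x => Lf b (h * (x - 1 / 2))) 0 1.

Definition htilde (b q : R) : R :=
  epsilon (inhabits 0) (fun h => 0 <= h < b /\ Derive (Gf b) h = q).

Definition Hf (b d s : R) : R := RInt (fun x => Lf b (s * x + d - b / 2)) 0 1.

Definition s_delta (b d q : R) : R :=
  epsilon (inhabits 0) (fun s => - d < s < b - d /\ Derive (Hf b d) s = q).

Definition delta0 (b q : R) : R := b / 2 - htilde b q / 2.

Definition psi (b q d : R) : R :=
  if Rle_dec d (delta0 b q) then Gf b (htilde b q) - q * htilde b q
  else Hf b d (s_delta b d q) - q * s_delta b d q.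

Definition T (b d a : R) : R := a * ln (Gamma b) + a * psi b (1 / a ^ 2) d.

Definition q_delta (b d : R) : R :=
  real (Glb_Rbar (fun q => 0 < q /\ delta0 b q < d)).

Definition qstar_delta (b d : R) : R :=
  real (Glb_Rbar (fun q => 0 < q /\ 0 <= d - b / 2 + s_delta b d q)).

Definition C1_on (f : R -> R) (U : R -> Prop) : Prop :=
  forall x, U x -> ex_derive f x /\ continuous (Derive f) x.

Definition C2_on (f : R -> R) (U : R -> Prop) : Prop :=
  forall x, U x -> ex_derive f x /\ ex_derive (Derive f) x /\
    continuous (Derive (Derive f)) x.

Definition strictly_concave_on (f : R -> R) (I : R -> Prop) : Prop :=
  forall x y t, I x -> I y -> x <> y -> 0 < t < 1 ->
    t * f x + (1 - t) * f y < f (t * x + (1 - t) * y).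

Definition strictly_convex_on (f : R -> R) (I : R -> Prop) : Prop :=
  forall x y t, I x -> I y -> x <> y -> 0 < t < 1 ->
    f (t * x + (1 - t) * y) < t * f x + (1 - t) * f y.

(* Main.v *)
Require Import Defs.
From Stdlib Require Import Reals Lra ZArith ClassicalEpsilon.
From Coquelicot Require Import Coquelicot.
Open Scope R_scope.


Ltac Req := match goal with |- @eq _ ?a ?b => change (@eq R a b) end.
Ltac nz := repeat split; repeat (apply Rmult_integral_contrapositive_currified); try lra.

Definition g0 t := - ln (1 - exp t).
Definition g1 t := exp t / (1 - exp t).
Definition g2 t := exp t / (1 - exp t) ^ 2.
Definition g3 t := exp t * (1 + exp t) / (1 - exp t) ^ 3.

Lemma exp_lt1 t : t < 0 -> 0 < 1 - exp t.
Proof. intros; assert (exp t < exp 0) by (apply exp_increasing; lra); rewrite exp_0 in H0; lra. Qed.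

Lemma g0_der t : t < 0 -> is_derive g0 t (g1 t).
Proof. intros Ht; pose proof (exp_lt1 t Ht). unfold g0, g1.
  auto_derive; [nz | field; lra]. Qed.
Lemma g1_der t : t < 0 -> is_derive g1 t (g2 t).
Proof. intros Ht; pose proof (exp_lt1 t Ht). unfold g1, g2.
  auto_derive; [nz | field; lra]. Qed.
Lemma g2_der t : t < 0 -> is_derive g2 t (g3 t).
Proof. intros Ht; pose proof (exp_lt1 t Ht). unfold g2, g3.
  auto_derive; [nz | field; lra]. Qed.
Lemma g3_cont t : t < 0 -> continuous g3 t.
Proof. intros Ht; pose proof (exp_lt1 t Ht). apply (ex_derive_continuous (K:=R_AbsRing) (V:=R_NormedModule)). unfold g3.
  auto_derive. nz. Qed.
Lemma g0_ge0 t : t < 0 -> 0 <= g0 t.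
Proof. intros Ht; pose proof (exp_lt1 t Ht). pose proof (exp_pos t). unfold g0.
  assert (ln (1 - exp t) <= ln 1). { apply Rcomplements.ln_le; lra. }
  rewrite ln_1 in H1; lra. Qed.
Lemma g0_le t1 t2 : t1 <= t2 -> t2 < 0 -> g0 t1 <= g0 t2.
Proof. intros H Ht; pose proof (exp_lt1 t2 Ht). unfold g0.
  assert (exp t1 <= exp t2). { destruct H. left; apply exp_increasing; lra. subst; lra. }
  assert (ln (1 - exp t2) <= ln (1 - exp t1)). { apply Rcomplements.ln_le; lra. } lra. Qed.
Lemma g1_lt t1 t2 : t1 < t2 -> t2 < 0 -> g1 t1 < g1 t2.
Proof. intros H Ht; pose proof (exp_lt1 t2 Ht). unfold g1.
  assert (exp t1 < exp t2) by (apply exp_increasing; lra). pose proof (exp_pos t1).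
  apply Rmult_lt_reg_r with ((1 - exp t1) * (1 - exp t2)). apply Rmult_lt_0_compat; lra.
  field_simplify; try lra. Qed.
Lemma g2_ge t : t < 0 -> exp t <= g2 t.
Proof. intros Ht; pose proof (exp_lt1 t Ht). pose proof (exp_pos t). unfold g2.
  apply Rmult_le_reg_r with ((1 - exp t)^2). apply pow_lt; lra.
  field_simplify; try lra. assert ((1 - exp t) ^2 <= 1). { rewrite <- (pow1 2). apply pow_incr. lra. }
  nra. Qed.
Lemma g0_big Y : exists t, t < 0 /\ Y <= g0 t.
Proof. set (Y' := Rmax Y 1). assert (0 < exp (- Y') < 1).
  { split. apply exp_pos. rewrite <- exp_0. apply exp_increasing. unfold Y'; pose proof (Rmax_r Y 1); lra. }
  exists (ln (1 - exp (- Y'))). split.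
  rewrite <- ln_1. apply ln_increasing; lra.
  unfold g0. rewrite exp_ln by lra. replace (1 - (1 - exp (- Y'))) with (exp (- Y')) by ring.
  rewrite ln_exp. unfold Y'; pose proof (Rmax_l Y 1); lra. Qed.

Definition KL b := ln (1 - exp (- b)) - ln (c_beta b).
Definition Lx b u := KL b + g0 (u - b/2) + g0 (- u - b/2).
Definition L1 b u := g1 (u - b/2) - g1 (- u - b/2).
Definition L2 b u := g2 (u - b/2) + g2 (- u - b/2).
Definition L3 b u := g3 (u - b/2) - g3 (- u - b/2).

Lemma exp_mul_INR x n : exp (x * INR n) = exp x ^ n.
Proof. induction n. simpl. rewrite Rmult_0_r, exp_0; ring.
  rewrite S_INR, Rmult_plus_distr_l, exp_plus, IHn, Rmult_1_r. simpl; ring. Qed.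

Lemma geom1 r : 0 < r < 1 -> is_series (fun n => r ^ S n) (r / (1 - r)).
Proof. intros Hr. assert (H := is_series_geom r ltac:(rewrite Rabs_pos_eq; lra)).
  apply (is_series_scal_l r) in H. unfold scal in H; simpl in H; unfold mult in H; simpl in H.
  replace (r / (1 - r)) with (r * / (1 - r)) by (unfold Rdiv; ring). exact H. Qed.

Lemma Lf_eq b h : 0 < b -> - (b/2) < h < b/2 -> Lf b h = Lx b h.
Proof. intros Hb Hh.
  set (r1 := exp (h - b/2)). set (r2 := exp (- h - b/2)).
  assert (H1 : 0 < r1 < 1). { split. apply exp_pos. rewrite <- exp_0. apply exp_increasing; lra. }
  assert (H2 : 0 < r2 < 1). { split. apply exp_pos. rewrite <- exp_0. apply exp_increasing; lra. }
  assert (Hs : zsum (fun k => exp (h * IZR k) * exp (- (b * Rabs (IZR k) / 2)))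
     = 1 + r1 / (1 - r1) + r2 / (1 - r2)).
  { unfold zsum. change (IZR 0) with 0. rewrite Rmult_0_r, Rabs_R0. replace (- (b * 0 / 2)) with 0 by field.
    rewrite exp_0, Rmult_1_r. rewrite Rplus_assoc. f_equal.
    apply is_series_unique.
    eapply is_series_ext; [| apply (is_series_plus _ _ _ _ (geom1 r1 H1) (geom1 r2 H2))].
    intros n. rewrite opp_IZR, <- !INR_IZR_INZ. rewrite Rabs_Ropp, Rabs_pos_eq by apply pos_INR.
    change (plus (r1 ^ S n) (r2 ^ S n)) with (r1 ^ S n + r2 ^ S n).
    unfold r1, r2. rewrite <- !exp_mul_INR. rewrite <- !exp_plus. f_equal; f_equal; field. }
  unfold Lf. rewrite Hs.
  assert (Hc : 0 < c_beta b). { unfold c_beta. assert (0 < exp (- (b/2)) < 1).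
    { split. apply exp_pos. rewrite <- exp_0. apply exp_increasing; lra. }
    apply Rdiv_lt_0_compat; lra. }
  assert (Hr : r1 * r2 = exp (- b)). { unfold r1, r2; rewrite <- exp_plus; f_equal; field. }
  assert (He : 0 < 1 - exp (- b)). { rewrite <- Hr. nra. }
  replace (1 + r1 / (1 - r1) + r2 / (1 - r2)) with ((1 - exp (- b)) * / (1 - r1) * / (1 - r2))
    by (rewrite <- Hr; field; lra).
  unfold Lx, KL, g0. fold r1. replace (- h - b/2) with (- h - b/2) by ring. fold r2.
  unfold Rdiv. rewrite !ln_mult; try (apply Rinv_0_lt_compat; lra); try lra;
    try (apply Rmult_lt_0_compat; try apply Rmult_lt_0_compat; try apply Rinv_0_lt_compat; lra).
  rewrite !ln_Rinv by lra. ring. Qed.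

Lemma comp_lin (f f' : R -> R) a c x :
  is_derive f (a*x+c) (f' (a*x+c)) -> is_derive (fun x => f (a*x+c)) x (a * f' (a*x+c)).
Proof. intros H. apply (is_derive_comp f (fun x => a*x+c) x (f' (a*x+c)) a); auto.
  auto_derive; auto; ring. Qed.

Lemma pair_der (f f' : R -> R) b u (s : R) :
  0 < b -> - (b/2) < u < b/2 ->
  (forall t, t < 0 -> is_derive f t (f' t)) ->
  is_derive (fun u => f (u - b/2) + s * f (- u - b/2)) u (f' (u - b/2) - s * f' (- u - b/2)).
Proof. intros Hb Hu Hf.
  assert (A := comp_lin f f' 1 (- (b/2)) u ltac:(apply Hf; lra)).
  assert (B := comp_lin f f' (-1) (- (b/2)) u ltac:(apply Hf; lra)).
  apply (is_derive_scal _ _ s) in B.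
  pose proof (is_derive_plus _ _ _ _ _ A B) as C.
  replace (1 * u + - (b/2)) with (u - b/2) in C by ring. replace (-1 * u + - (b/2)) with (- u - b/2) in C by ring.
  replace (f' (u - b/2) - s * f' (- u - b/2)) with (plus (1 * f' (u - b/2)) (s * (-1 * f' (- u - b/2)))) by (unfold plus; simpl; ring).
  eapply is_derive_ext; [|exact C]. intros t; simpl. unfold plus; simpl.
  replace (1 * t + - (b/2)) with (t - b/2) by ring. replace (-1 * t + - (b/2)) with (- t - b/2) by ring. reflexivity.
Qed.

Lemma cont_pt (f : R -> R) x : continuous f x <-> continuity_pt f x.
Proof. rewrite continuity_pt_filterlim. unfold continuous. tauto. Qed.

Lemma der_eq (f g : R -> R) x l l' : is_derive f x l -> l = l' -> (forall t, f t = g t) -> is_derive g x l'.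
Proof. intros H -> E. eapply is_derive_ext; [exact E| exact H]. Qed.

Section Lsec.
Variable b : R.
Hypothesis Hb : 0 < b.

Definition dom u := - (b/2) < u < b/2.

Lemma Lx_der u : dom u -> is_derive (Lx b) u (L1 b u).
Proof. intros Hu. pose proof (pair_der g0 g1 b u 1 Hb Hu g0_der) as H.
  pose proof (is_derive_plus (fun _ => KL b) _ u _ _ (is_derive_const (KL b) u) H) as H2.
  eapply der_eq; [exact H2| |]; unfold plus, zero; simpl; unfold L1, Lx; [ring | intros; ring]. Qed.
Lemma L1_der u : dom u -> is_derive (L1 b) u (L2 b u).
Proof. intros Hu. pose proof (pair_der g1 g2 b u (-1) Hb Hu g1_der) as H.
  eapply der_eq; [exact H| |]; unfold L1, L2; simpl; [ring | intros; ring]. Qed.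
Lemma L2_der u : dom u -> is_derive (L2 b) u (L3 b u).
Proof. intros Hu. pose proof (pair_der g2 g3 b u 1 Hb Hu g2_der) as H.
  eapply der_eq; [exact H| |]; unfold L3, L2; simpl; [ring | intros; ring]. Qed.
Lemma L3_cont u : dom u -> continuous (L3 b) u.
Proof. intros Hu. unfold dom in Hu. apply cont_pt. unfold L3.
  apply continuity_pt_minus.
  - apply (continuity_pt_comp (fun u => u - b/2) g3). apply continuity_pt_minus. apply continuity_pt_id. apply continuity_pt_const. intros ??; auto. apply cont_pt, g3_cont; lra.
  - apply (continuity_pt_comp (fun u => - u - b/2) g3). apply continuity_pt_minus. apply continuity_pt_opp. apply continuity_pt_id. apply continuity_pt_const. intros ??; auto. apply cont_pt, g3_cont; lra.
Qed.

Lemma L1_cont u : dom u -> continuous (L1 b) u.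
Proof. intros; apply (ex_derive_continuous (K:=R_AbsRing) (V:=R_NormedModule)). eexists; apply L1_der; auto. Qed.
Lemma L2_cont u : dom u -> continuous (L2 b) u.
Proof. intros; apply (ex_derive_continuous (K:=R_AbsRing) (V:=R_NormedModule)). eexists; apply L2_der; auto. Qed.
Lemma Lx_cont u : dom u -> continuous (Lx b) u.
Proof. intros; apply (ex_derive_continuous (K:=R_AbsRing) (V:=R_NormedModule)). eexists; apply Lx_der; auto. Qed.
Lemma Lx_even u : Lx b (- u) = Lx b u.
Proof. unfold Lx. rewrite Ropp_involutive. ring. Qed.
Lemma L1_odd u : L1 b (- u) = - L1 b u.
Proof. unfold L1. rewrite Ropp_involutive. ring. Qed.
Lemma L1_0 : L1 b 0 = 0.
Proof. unfold L1. replace (- 0 - b/2) with (0 - b/2) by ring. ring. Qed.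
Lemma L1_lt u v : dom u -> dom v -> u < v -> L1 b u < L1 b v.
Proof. unfold dom, L1; intros Hu Hv H.
  assert (g1 (u - b/2) < g1 (v - b/2)) by (apply g1_lt; lra).
  assert (g1 (- v - b/2) < g1 (- u - b/2)) by (apply g1_lt; lra). lra. Qed.
Lemma L1_pos u : 0 < u < b/2 -> 0 < L1 b u.
Proof. intros H. rewrite <- L1_0. apply L1_lt; unfold dom; lra. Qed.
Lemma L1_neg u : - (b/2) < u < 0 -> L1 b u < 0.
Proof. intros H. rewrite <- L1_0. apply L1_lt; unfold dom; lra. Qed.
Lemma L1_le u v : dom u -> dom v -> u <= v -> L1 b u <= L1 b v.
Proof. intros Hu Hv [H|H]. left; apply L1_lt; auto. subst; lra. Qed.
Lemma L2_ge u : dom u -> exp (- b) <= L2 b u.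
Proof. unfold dom, L2; intros Hu.
  assert (exp (u - b/2) <= g2 (u - b/2)) by (apply g2_ge; lra).
  assert (exp (- u - b/2) <= g2 (- u - b/2)) by (apply g2_ge; lra).
  assert (exp (- b) < exp (u - b/2)) by (apply exp_increasing; lra).
  pose proof (exp_pos (- u - b/2)). lra. Qed.
Lemma Lx_ub M u : 0 <= M < b/2 -> Rabs u <= M -> Lx b u <= KL b + 2 * g0 (M - b/2).
Proof. intros HM Hu. apply Rabs_le_between in Hu. unfold Lx.
  assert (g0 (u - b/2) <= g0 (M - b/2)) by (apply g0_le; lra).
  assert (g0 (- u - b/2) <= g0 (M - b/2)) by (apply g0_le; lra). lra. Qed.
Lemma Lx_big Y m : 0 <= m < b/2 -> exists u, m <= u < b/2 /\ Y <= Lx b u.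
Proof. intros Hm. destruct (g0_big (Y - KL b)) as [t [Ht HY]].
  exists (Rmax (t + b/2) m). pose proof (Rmax_l (t + b/2) m). pose proof (Rmax_r (t + b/2) m).
  assert (Rmax (t + b/2) m < b/2) by (apply Rmax_lub_lt; lra).
  split. lra. unfold Lx.
  assert (g0 t <= g0 (Rmax (t + b/2) m - b/2)) by (apply g0_le; lra).
  assert (0 <= g0 (- Rmax (t + b/2) m - b/2)) by (apply g0_ge0; lra). lra. Qed.

End Lsec.

Lemma cmul (f g : R -> R) x : continuous f x -> continuous g x -> continuous (fun y => f y * g y) x.
Proof. intros H1 H2; apply cont_pt; apply cont_pt in H1; apply cont_pt in H2.
  exact (continuity_pt_mult f g x H1 H2). Qed.
Lemma ccomp (f g : R -> R) x : continuous f x -> continuous g (f x) -> continuous (fun y => g (f y)) x.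
Proof. intros H1 H2; apply cont_pt; apply cont_pt in H1; apply cont_pt in H2.
  exact (continuity_pt_comp f g x H1 H2). Qed.
Lemma cplus (f g : R -> R) x : continuous f x -> continuous g x -> continuous (fun y => f y + g y) x.
Proof. intros H1 H2; apply cont_pt; apply cont_pt in H1; apply cont_pt in H2.
  exact (continuity_pt_plus f g x H1 H2). Qed.
Lemma cminus (f g : R -> R) x : continuous f x -> continuous g x -> continuous (fun y => f y - g y) x.
Proof. intros H1 H2; apply cont_pt; apply cont_pt in H1; apply cont_pt in H2.
  exact (continuity_pt_minus f g x H1 H2). Qed.
Lemma cder (f : R -> R) x l : is_derive f x l -> continuous f x.
Proof. intros H; apply (ex_derive_continuous (K:=R_AbsRing) (V:=R_NormedModule)); eexists; eauto. Qed.
Lemma cpowlin p k x : continuous (fun t => (t - p) ^ k) x.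
Proof. apply (ex_derive_continuous (K:=R_AbsRing) (V:=R_NormedModule)). auto_derive; auto. Qed.
Lemma clin a p c x : continuous (fun t => a * (t - p) + c) x.
Proof. apply (ex_derive_continuous (K:=R_AbsRing) (V:=R_NormedModule)). auto_derive; auto. Qed.
Lemma cconst (a x : R) : continuous (fun _ : R => a) x.
Proof. apply cont_pt, continuity_pt_const. intros ??; auto. Qed.
Lemma cid x : continuous (fun t : R => t) x.
Proof. apply cont_pt, continuity_pt_id. Qed.

Lemma near2 (s t m : R) : 0 < m -> exists d : posreal, forall u v,
  Rabs (u - s) < d -> Rabs (v - t) < d -> Rabs (u * v - s * t) < m.
Proof. intros Hm. set (K := Rabs t + Rabs s + 1).
  assert (HK : 0 < K) by (unfold K; pose proof (Rabs_pos t); pose proof (Rabs_pos s); lra).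
  assert (Hd : 0 < Rmin 1 (m / K)) by (apply Rmin_pos; [lra| apply Rdiv_lt_0_compat; lra]).
  exists (mkposreal _ Hd). simpl. intros u v Hu Hv.
  pose proof (Rmin_l 1 (m/K)). pose proof (Rmin_r 1 (m/K)).
  replace (u * v - s * t) with ((u - s) * v + s * (v - t)) by ring.
  eapply Rle_lt_trans. apply Rabs_triang. rewrite !Rabs_mult.
  assert (Rabs v <= Rabs t + 1).
  { replace v with (t + (v - t)) by ring. eapply Rle_trans. apply Rabs_triang. lra. }
  assert (Rabs (u - s) * Rabs v <= Rabs (u - s) * (Rabs t + 1)) by (apply Rmult_le_compat_l; [apply Rabs_pos|lra]).
  assert (Rabs (u - s) * (Rabs t + 1) < Rmin 1 (m/K) * (Rabs t + 1)) by (apply Rmult_lt_compat_r; [pose proof (Rabs_pos t); lra| lra]).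
  assert (Rabs s * Rabs (v - t) <= Rabs s * Rmin 1 (m/K)) by (apply Rmult_le_compat_l; [apply Rabs_pos|lra]).
  assert (Rmin 1 (m/K) * K <= m). { apply Rle_trans with (m / K * K). apply Rmult_le_compat_r; lra. right; field; lra. }
  unfold K in *. nra. Qed.

Section Jsec.
Variables b p c : R.
Hypothesis Hb : 0 < b.
Hypothesis Hp : 0 <= p <= 1.

Definition Jk k (D : R -> R) s := RInt (fun x => (x - p) ^ k * D (s * (x - p) + c)) 0 1.
Definition Dm s := dom b (s * (0 - p) + c) /\ dom b (s * (1 - p) + c).

Lemma arg_in s x : Dm s -> 0 <= x <= 1 -> dom b (s * (x - p) + c).
Proof. unfold Dm, dom. intros [[A1 A2] [B1 B2]] Hx.
  replace (s * (x - p) + c) with ((1 - x) * (s * (0 - p) + c) + x * (s * (1 - p) + c)) by ring.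
  destruct (Req_dec x 0). subst; lra. split; nra. Qed.

Lemma dom_near u0 : dom b u0 -> exists d : posreal, forall u, Rabs (u - u0) < d -> dom b u.
Proof. unfold dom; intros H. assert (Hd : 0 < Rmin (u0 + b/2) (b/2 - u0)) by (apply Rmin_pos; lra).
  exists (mkposreal _ Hd); simpl; intros u Hu. apply Rabs_def2 in Hu.
  pose proof (Rmin_l (u0 + b/2) (b/2 - u0)). pose proof (Rmin_r (u0 + b/2) (b/2 - u0)). lra. Qed.

Lemma arg_near s t : dom b (s * (t - p) + c) -> exists d : posreal, forall u v,
  Rabs (u - s) < d -> Rabs (v - t) < d -> dom b (u * (v - p) + c).
Proof. intros H. destruct (dom_near _ H) as [e He].
  destruct (near2 s (t - p) e (cond_pos e)) as [d Hd]. exists d. intros u v Hu Hv.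
  apply He. replace (u * (v - p) + c - (s * (t - p) + c)) with (u * (v - p) - s * (t - p)) by ring.
  apply Hd; auto. replace (v - p - (t - p)) with (v - t) by ring; auto. Qed.

Lemma Dm_near s : Dm s -> exists d : posreal, forall u, Rabs (u - s) < d -> Dm u.
Proof. intros [H0 H1]. destruct (arg_near s 0 H0) as [d0 D0]. destruct (arg_near s 1 H1) as [d1 D1].
  assert (Hd : 0 < Rmin d0 d1) by (apply Rmin_pos; apply cond_pos).
  exists (mkposreal _ Hd); simpl; intros u Hu. pose proof (Rmin_l d0 d1). pose proof (Rmin_r d0 d1).
  split; [apply D0 | apply D1]; try lra; rewrite Rminus_diag, Rabs_R0; apply cond_pos. Qed.

Lemma Dm_conv s1 s2 s : Dm s1 -> Dm s2 -> s1 <= s <= s2 -> Dm s.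
Proof. unfold Dm, dom. intros [[A1 A2] [B1 B2]] [[C1 C2] [E1 E2]] Hs.
  destruct (Req_dec s1 s2). subst. assert (s = s2) by lra. subst. tauto.
  set (x := (s - s1) / (s2 - s1)).
  assert (0 <= x <= 1). { unfold x. split. apply Rdiv_le_0_compat; lra.
    apply Rmult_le_reg_r with (s2 - s1). lra. field_simplify; lra. }
  assert (Es : s = (1 - x) * s1 + x * s2) by (unfold x; field; lra).
  clearbody x. subst s. split; split; nra. Qed.

Lemma F_der (D D' : R -> R) k t y : dom b (y * (t - p) + c) -> is_derive D (y * (t - p) + c) (D' (y * (t - p) + c)) ->
  is_derive (fun u => (t - p) ^ k * D (u * (t - p) + c)) y ((t - p) ^ S k * D' (y * (t - p) + c)).
Proof. intros _ H. rewrite (Rmult_comm y) in H.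
  apply (comp_lin D D' (t - p) c y) in H. apply (is_derive_scal _ _ ((t - p) ^ k)) in H.
  eapply der_eq. exact H. simpl; rewrite (Rmult_comm y); ring. intros u; simpl; rewrite (Rmult_comm u); ring. Qed.

Lemma int_cont (D : R -> R) k s x : (forall u, dom b u -> continuous D u) -> dom b (s * (x - p) + c) ->
  continuous (fun x => (x - p) ^ k * D (s * (x - p) + c)) x.
Proof. intros HD Hx. apply cmul. apply cpowlin. apply (ccomp (fun x => s * (x - p) + c) D). apply clin. auto. Qed.

Lemma ex_J (D : R -> R) k s : (forall u, dom b u -> continuous D u) -> Dm s ->
  ex_RInt (fun x => (x - p) ^ k * D (s * (x - p) + c)) 0 1.
Proof. intros HD Hs. apply (ex_RInt_continuous (V:=R_CompleteNormedModule)). rewrite Rmin_left, Rmax_right by lra.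
  intros z Hz. apply int_cont; auto. apply arg_in; auto. Qed.

Lemma PIder (D D' : R -> R) k s : (forall u, dom b u -> is_derive D u (D' u)) ->
  (forall u, dom b u -> continuous D' u) -> Dm s -> is_derive (Jk k D) s (Jk (S k) D' s).
Proof. intros HD HD' Hs.
  assert (HDc : forall u, dom b u -> continuous D u) by (intros; eapply cder; eauto).
  destruct (Dm_near s Hs) as [e He].
  assert (Hloc : locally s (fun y => Dm y)). { exists e. intros y Hy. apply He. exact Hy. }
  unfold Jk.
  eapply der_eq; [apply (is_derive_RInt_param (fun u t => (t - p) ^ k * D (u * (t - p) + c)) 0 1 s) | |].
  - eapply filter_imp; [|exact Hloc]. intros y Hy t Ht. rewrite Rmin_left, Rmax_right in Ht by lra.
    eexists. apply F_der. apply arg_in; auto. apply HD, arg_in; auto.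
  - intros t Ht. rewrite Rmin_left, Rmax_right in Ht by lra.
    assert (Ha := arg_in s t Hs Ht). destruct (arg_near s t Ha) as [d Hd].
    apply continuity_2d_pt_ext_loc with (f := fun u v => (v - p) ^ S k * D' (u * (v - p) + c)).
    + exists d. intros u v Hu Hv. symmetry. apply is_derive_unique. apply F_der. apply Hd; auto. apply HD, Hd; auto.
    + apply continuity_2d_pt_mult.
      * apply (continuity_1d_2d_pt_comp (fun w => w ^ S k) (fun u v => v - p)).
        apply cont_pt. apply (ex_derive_continuous (K:=R_AbsRing) (V:=R_NormedModule)). auto_derive; auto.
        apply continuity_2d_pt_minus. apply continuity_2d_pt_id2. apply continuity_2d_pt_const.
      * apply (continuity_1d_2d_pt_comp D' (fun u v => u * (v - p) + c)).
        apply cont_pt. apply HD'. auto.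
        apply continuity_2d_pt_plus. apply continuity_2d_pt_mult. apply continuity_2d_pt_id1.
        apply continuity_2d_pt_minus. apply continuity_2d_pt_id2. apply continuity_2d_pt_const.
        apply continuity_2d_pt_const.
  - eapply filter_imp; [|exact Hloc]. intros y Hy. apply ex_J; auto.
  - apply RInt_ext. rewrite Rmin_left, Rmax_right by lra. intros x Hx.
    apply is_derive_unique. apply F_der. apply arg_in; auto; lra. apply HD, arg_in; auto; lra.
  - intros; reflexivity.
Qed.

End Jsec.

Lemma ftc (F f : R -> R) a b : a <= b -> (forall x, a <= x <= b -> is_derive F x (f x)) ->
  (forall x, a <= x <= b -> continuous f x) -> RInt f a b = F b - F a.
Proof. intros Hab HF Hf. apply is_RInt_unique.
  apply (is_RInt_derive (V:=R_CompleteNormedModule)); rewrite Rmin_left, Rmax_right by lra; auto. Qed.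

Lemma exR_c (f : R -> R) a b : a <= b -> (forall x, a <= x <= b -> continuous f x) -> ex_RInt f a b.
Proof. intros H Hf. apply (ex_RInt_continuous (V:=R_CompleteNormedModule)).
  rewrite Rmin_left, Rmax_right by lra; auto. Qed.

Lemma RInt_plusR (f g : R -> R) a b : ex_RInt f a b -> ex_RInt g a b ->
  RInt (fun x => f x + g x) a b = RInt f a b + RInt g a b.
Proof. intros. exact (RInt_plus (V:=R_CompleteNormedModule) f g a b H H0). Qed.
Lemma RInt_scalR (f : R -> R) a b l : ex_RInt f a b -> RInt (fun x => l * f x) a b = l * RInt f a b.
Proof. intros. exact (RInt_scal (V:=R_CompleteNormedModule) f a b l H). Qed.
Lemma RInt_ChaslesR (f : R -> R) a b c : ex_RInt f a b -> ex_RInt f b c -> RInt f a b + RInt f b c = RInt f a c.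
Proof. intros. exact (RInt_Chasles (V:=R_CompleteNormedModule) f a b c H H0). Qed.

Lemma der_prod2 (p : R) (f f' : R -> R) x : is_derive f x (f' x) ->
  is_derive (fun x => (x - p) ^ 2 * f x) x (2 * (x - p) * f x + (x - p) ^ 2 * f' x).
Proof. intros H. assert (H0 : is_derive (fun x => (x - p) ^ 2) x (2 * (x - p))).
  { auto_derive. auto. ring. }
  pose proof (is_derive_mult _ _ x _ _ H0 H ltac:(intros; apply Rmult_comm)) as H2.
  eapply der_eq. exact H2. unfold plus, mult; simpl; ring. intros; reflexivity. Qed.

Section J2sec.
Variables b p c : R.
Hypothesis Hb : 0 < b.
Hypothesis Hp : 0 <= p <= 1.

Notation Dm := (Dm b p c).
Definition J0 := Jk p c 0 (Lx b).
Definition J1 := Jk p c 1 (L1 b).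
Definition J2 := Jk p c 2 (L2 b).
Definition J3 := Jk p c 3 (L3 b).

Lemma dJ0 s : Dm s -> is_derive J0 s (J1 s).
Proof. intros; apply (PIder b); auto. intros; apply Lx_der; auto. intros; apply L1_cont; auto. Qed.
Lemma dJ1 s : Dm s -> is_derive J1 s (J2 s).
Proof. intros; apply (PIder b); auto. intros; apply L1_der; auto. intros; apply L2_cont; auto. Qed.
Lemma dJ2 s : Dm s -> is_derive J2 s (J3 s).
Proof. intros; apply (PIder b); auto. intros; apply L2_der; auto. intros; apply L3_cont; auto. Qed.

Lemma cJ1 s : Dm s -> continuous J1 s.
Proof. intros; eapply cder; apply dJ1; auto. Qed.
Lemma cJ2 s : Dm s -> continuous J2 s.
Proof. intros; eapply cder; apply dJ2; auto. Qed.

Lemma J2_pos s : Dm s -> 0 < J2 s.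
Proof. intros Hs. unfold J2, Jk.
  apply Rlt_le_trans with (RInt (fun x => exp (- b) * (x - p) ^ 2) 0 1).
  - rewrite (ftc (fun x => exp (- b) * ((x - p) ^ 3 / 3))); try lra.
    +
      assert (0 < (1 - p) ^ 3 / 3 - (0 - p) ^ 3 / 3).
      { replace ((1 - p) ^ 3 / 3 - (0 - p) ^ 3 / 3) with ((1 - p) ^ 3 / 3 + p ^ 3 / 3) by field.
        destruct (Req_dec p 0). subst. lra.
        assert (0 < p ^ 3) by (apply pow_lt; lra). assert (0 <= (1 - p) ^ 3) by (apply pow_le; lra). lra. }
      pose proof (exp_pos (- b)). nra.
    + intros x _. auto_derive; auto. simpl; field.
    + intros x _. apply cmul. apply cconst. apply cpowlin.
  - apply RInt_le; try lra.
    + apply exR_c; try lra. intros; apply cmul. apply cconst. apply cpowlin.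
    + apply (ex_J b); auto. intros; apply (L2_cont b); auto.
    + intros x Hx. rewrite Rmult_comm. apply Rmult_le_compat_l. apply pow2_ge_0.
      apply L2_ge; auto. apply (arg_in b p c); auto; lra.
Qed.

Lemma J1_incr s1 s2 : Dm s1 -> Dm s2 -> s1 < s2 -> J1 s1 < J1 s2.
Proof. intros H1 H2 H.
  destruct (MVT_gen J1 s1 s2 J2) as [x [Hx E]].
  - rewrite Rmin_left, Rmax_right by lra. intros x Hx. apply dJ1. apply (Dm_conv b p c Hp s1 s2); auto; lra.
  - rewrite Rmin_left, Rmax_right by lra. intros x Hx. apply cont_pt, cJ1. apply (Dm_conv b p c Hp s1 s2); auto; lra.
  - rewrite Rmin_left, Rmax_right in Hx by lra.
    assert (0 < J2 x) by (apply J2_pos; apply (Dm_conv b p c Hp s1 s2); auto; lra). nra. Qed.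

Lemma J1_le s1 s2 : Dm s1 -> Dm s2 -> s1 <= s2 -> J1 s1 <= J1 s2.
Proof. intros H1 H2 [H|H]. left; apply J1_incr; auto. subst; lra. Qed.

Lemma J1_inj s1 s2 : Dm s1 -> Dm s2 -> J1 s1 = J1 s2 -> s1 = s2.
Proof. intros H1 H2 E. destruct (Rtotal_order s1 s2) as [H|[H|H]]; auto.
  apply J1_incr in H; auto; lra. apply J1_incr in H; auto; lra. Qed.

Definition Bd s := (1 - p) ^ 2 * L1 b (s * (1 - p) + c) - p ^ 2 * L1 b (s * (0 - p) + c).

Lemma der_lin (D D' : R -> R) s x : is_derive D (s * (x - p) + c) (D' (s * (x - p) + c)) ->
  is_derive (fun x => D (s * (x - p) + c)) x (s * D' (s * (x - p) + c)).
Proof. intros H. replace (s * (x - p) + c) with (s * x + (- s * p + c)) in * by ring.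
  apply (comp_lin D D' s (- s * p + c) x) in H. eapply der_eq. exact H. reflexivity.
  intros t; cbv beta; f_equal; ring. Qed.

Lemma J_ident s : Dm s -> s * J2 s + 2 * J1 s = Bd s.
Proof. intros Hs.
  assert (Hc1 : forall x, 0 <= x <= 1 -> continuous (fun x => (x - p) ^ 1 * L1 b (s * (x - p) + c)) x).
  { intros; apply (int_cont b); auto. intros; apply L1_cont; auto. apply (arg_in b p c); auto. }
  assert (Hc2 : forall x, 0 <= x <= 1 -> continuous (fun x => (x - p) ^ 2 * L2 b (s * (x - p) + c)) x).
  { intros; apply (int_cont b); auto. intros; apply L2_cont; auto. apply (arg_in b p c); auto. }
  assert (E : RInt (fun x => 2 * ((x - p) ^ 1 * L1 b (s * (x - p) + c)) + s * ((x - p) ^ 2 * L2 b (s * (x - p) + c))) 0 1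
     = Bd s).
  { rewrite (ftc (fun x => (x - p) ^ 2 * L1 b (s * (x - p) + c))); try lra.
    - unfold Bd. simpl; ring.
    - intros x Hx. assert (Ha := arg_in b p c s x Hs Hx).
      pose proof (L1_der b Hb _ Ha) as H1. apply der_lin in H1. apply (der_prod2 p (fun x => L1 b (s*(x-p)+c)) (fun x => s * L2 b (s*(x-p)+c))) in H1.
      eapply der_eq. exact H1. simpl; ring. reflexivity.
    - intros x Hx. apply cplus. apply (cmul (fun _ => 2)). apply cconst. auto.
      apply (cmul (fun _ => s)). apply cconst. auto. }
  rewrite RInt_plusR, !RInt_scalR in E.
  - unfold J1, J2, Jk. lra.
  - apply exR_c; auto; lra.
  - apply exR_c; auto; lra.
  - apply exR_c; try lra. intros; apply (cmul (fun _ => 2)). apply cconst. auto.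
  - apply exR_c; try lra. intros; apply (cmul (fun _ => s)). apply cconst. auto.
Qed.

End J2sec.

Section Div.
Variables b p c : R.
Hypothesis Hb : 0 < b.
Hypothesis Hp : 0 <= p <= 1/2.

Let Hp' : 0 <= p <= 1. Proof. lra. Qed.

Definition Af s x := (x - p) * (L1 b (s * (x - p) + c) - L1 b c).
Definition Ebd s := (1/4) * ((Lx b (s * (1 - p) + c) - Lx b (s * (3/4 - p) + c)) / s - L1 b c / 4) + L1 b c * (1/2 - p).

Lemma dom_c s : Dm b p c s -> dom b c.
Proof. intros Hs. pose proof (arg_in b p c s p Hs Hp'). replace (s * (p - p) + c) with c in H by ring. auto. Qed.

Lemma Af_cont s x : Dm b p c s -> 0 <= x <= 1 -> continuous (Af s) x.
Proof. intros Hs Hx. unfold Af. apply (cmul (fun x => x - p)).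
  apply (ex_derive_continuous (K:=R_AbsRing) (V:=R_NormedModule)). auto_derive; auto.
  apply (cminus (fun x => L1 b (s * (x - p) + c))). apply (ccomp (fun x => s * (x - p) + c)). apply clin.
  apply L1_cont; auto. apply (arg_in b p c); auto. apply cconst. Qed.

Lemma J1_split s : Dm b p c s ->
  J1 b p c s = RInt (Af s) 0 (3/4) + RInt (Af s) (3/4) 1 + L1 b c * (1/2 - p).
Proof. intros Hs. rewrite RInt_ChaslesR.
  2: apply exR_c; [lra| intros; apply Af_cont; auto; lra].
  2: apply exR_c; [lra| intros; apply Af_cont; auto; lra].
  assert (E2 : RInt (fun x => L1 b c * (x - p)) 0 1 = L1 b c * (1/2 - p)).
  { rewrite (ftc (fun x => L1 b c * ((x - p) ^ 2 / 2))); try lra.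
    - intros x _. auto_derive; auto. field.
    - intros x _. apply (cmul (fun _ => L1 b c)). apply cconst.
      apply (ex_derive_continuous (K:=R_AbsRing) (V:=R_NormedModule)). auto_derive; auto. }
  rewrite <- E2. rewrite <- RInt_plusR.
  - unfold J1, Jk. apply RInt_ext. intros x _. unfold Af. simpl. ring.
  - apply exR_c; [lra| intros; apply Af_cont; auto; lra].
  - apply exR_c; [lra|]. intros; apply (cmul (fun _ => L1 b c)). apply cconst.
      apply (ex_derive_continuous (K:=R_AbsRing) (V:=R_NormedModule)). auto_derive; auto.
Qed.

Lemma B_int s : Dm b p c s -> s <> 0 ->
  RInt (fun x => (1/4) * (L1 b (s * (x - p) + c) - L1 b c)) (3/4) 1
  = (1/4) * ((Lx b (s * (1 - p) + c) - Lx b (s * (3/4 - p) + c)) / s - L1 b c / 4).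
Proof. intros Hs Hs0.
  rewrite (ftc (fun x => (1/4) * (Lx b (s * (x - p) + c) / s - L1 b c * x))); try lra.
  - intros x Hx. assert (Ha := arg_in b p c s x Hs ltac:(lra)).
    pose proof (Lx_der b Hb _ Ha) as H1. apply (der_lin p c) in H1.
    apply (is_derive_scal _ _ (/ s)) in H1.
    assert (H2 : is_derive (fun x => L1 b c * x) x (L1 b c)). { auto_derive; auto. ring. }
    pose proof (is_derive_minus _ _ _ _ _ H1 H2) as H3.
    apply (is_derive_scal _ _ (1/4)) in H3.
    eapply der_eq. exact H3. unfold minus, plus, opp; simpl. field; auto.
    intros t; unfold minus, plus, opp; simpl. field; auto.
  - intros x Hx. apply (cmul (fun _ => 1/4)). apply cconst.
    apply (cminus (fun x => L1 b (s * (x - p) + c))). apply (ccomp (fun x => s * (x - p) + c)). apply clin.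
    apply L1_cont; auto. apply (arg_in b p c); auto; lra. apply cconst.
Qed.

Lemma J1_lower s : Dm b p c s -> 0 < s -> Ebd s <= J1 b p c s.
Proof. intros Hs Hs0. rewrite J1_split by auto. unfold Ebd. rewrite <- B_int by (auto; lra).
  assert (Hc := dom_c s Hs).
  assert (0 <= RInt (Af s) 0 (3/4)).
  { apply RInt_ge_0. lra. apply exR_c; [lra| intros; apply Af_cont; auto; lra].
    intros x Hx. unfold Af. assert (Ha := arg_in b p c s x Hs ltac:(lra)).
    destruct (Rle_dec p x).
    - assert (L1 b c <= L1 b (s * (x - p) + c)) by (apply L1_le; auto; nra). nra.
    - assert (L1 b (s * (x - p) + c) <= L1 b c) by (apply L1_le; auto; nra). nra. }
  assert (RInt (fun x => (1/4) * (L1 b (s * (x - p) + c) - L1 b c)) (3/4) 1 <= RInt (Af s) (3/4) 1).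
  { apply RInt_le. lra.
    - apply exR_c; [lra|]. intros x Hx. apply (cmul (fun _ => 1/4)). apply cconst.
      apply (cminus (fun x => L1 b (s * (x - p) + c))). apply (ccomp (fun x => s * (x - p) + c)). apply clin.
      apply L1_cont; auto. apply (arg_in b p c); auto; lra. apply cconst.
    - apply exR_c; [lra| intros; apply Af_cont; auto; lra].
    - intros x Hx. unfold Af. assert (Ha := arg_in b p c s x Hs ltac:(lra)).
      assert (L1 b c <= L1 b (s * (x - p) + c)) by (apply L1_le; auto; nra). nra. }
  lra. Qed.

Lemma J1_upper s : Dm b p c s -> s < 0 -> J1 b p c s <= Ebd s.
Proof. intros Hs Hs0. rewrite J1_split by auto. unfold Ebd. rewrite <- B_int by (auto; lra).
  assert (Hc := dom_c s Hs).
  assert (RInt (Af s) 0 (3/4) <= 0).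
  { apply Rle_trans with (RInt (fun _ => 0) 0 (3/4)).
    2: { rewrite RInt_const. unfold scal; simpl; unfold mult; simpl. lra. }
    apply RInt_le. lra. apply exR_c; [lra| intros; apply Af_cont; auto; lra].
    apply exR_c; [lra| intros; apply cconst].
    intros x Hx. unfold Af. assert (Ha := arg_in b p c s x Hs ltac:(lra)).
    destruct (Rle_dec p x).
    - assert (L1 b (s * (x - p) + c) <= L1 b c) by (apply L1_le; auto; nra). nra.
    - assert (L1 b c <= L1 b (s * (x - p) + c)) by (apply L1_le; auto; nra). nra. }
  assert (RInt (Af s) (3/4) 1 <= RInt (fun x => (1/4) * (L1 b (s * (x - p) + c) - L1 b c)) (3/4) 1).
  { apply RInt_le. lra.
    - apply exR_c; [lra| intros; apply Af_cont; auto; lra].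
    - apply exR_c; [lra|]. intros x Hx. apply (cmul (fun _ => 1/4)). apply cconst.
      apply (cminus (fun x => L1 b (s * (x - p) + c))). apply (ccomp (fun x => s * (x - p) + c)). apply clin.
      apply L1_cont; auto. apply (arg_in b p c); auto; lra. apply cconst.
    - intros x Hx. unfold Af. assert (Ha := arg_in b p c s x Hs ltac:(lra)).
      assert (L1 b (s * (x - p) + c) <= L1 b c) by (apply L1_le; auto; nra). nra. }
  lra. Qed.

End Div.

Lemma loc_int lo hi x : lo < x < hi -> locally x (fun y => lo < y < hi).
Proof. intros H. assert (He : 0 < Rmin (x - lo) (hi - x)) by (apply Rmin_pos; lra).
  exists (mkposreal _ He). intros y Hy. simpl in Hy. unfold ball in Hy; simpl in Hy; unfold AbsRing_ball in Hy; simpl in Hy.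
  unfold abs, minus, plus, opp in Hy; simpl in Hy. apply Rabs_def2 in Hy.
  pose proof (Rmin_l (x - lo) (hi - x)). pose proof (Rmin_r (x - lo) (hi - x)). lra. Qed.

Section GH.
Variable b : R.
Hypothesis Hb : 0 < b.

Definition G1 := J1 b (1/2) 0.
Definition G2 := J2 b (1/2) 0.

Lemma DmG h : - b < h < b -> Dm b (1/2) 0 h.
Proof. intros H; unfold Dm, dom; split; split; lra. Qed.

Lemma Gf_eq h : - b < h < b -> Gf b h = J0 b (1/2) 0 h.
Proof. intros H. unfold Gf, J0, Jk. apply RInt_ext. rewrite Rmin_left, Rmax_right by lra.
  intros x Hx. simpl. rewrite Rplus_0_r, Rmult_1_l. apply Lf_eq; auto. split; nra. Qed.

Lemma dGf h : - b < h < b -> is_derive (Gf b) h (G1 h).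
Proof. intros H. apply is_derive_ext_loc with (J0 b (1/2) 0).
  eapply filter_imp; [| apply (loc_int (- b) b h H)]. intros y Hy. symmetry; apply Gf_eq; auto.
  apply (dJ0 b (1/2) 0 Hb). apply DmG; auto. Qed.

Lemma DGf h : - b < h < b -> Derive (Gf b) h = G1 h.
Proof. intros; apply is_derive_unique, dGf; auto. Qed.

Lemma G1_0 : G1 0 = 0.
Proof. unfold G1, J1, Jk. transitivity (RInt (fun _ : R => 0) 0 1).
  apply RInt_ext. intros x _. rewrite Rmult_0_l, Rplus_0_l, L1_0. apply Rmult_0_r.
  rewrite RInt_const. unfold scal; simpl; unfold mult; simpl; ring. Qed.

Lemma G1_incr h1 h2 : - b < h1 -> h1 < h2 -> h2 < b -> G1 h1 < G1 h2.
Proof. intros. apply J1_incr; auto. lra. apply DmG; lra. apply DmG; lra. Qed.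

Lemma G1_big q : exists h, 0 < h < b /\ q < G1 h.
Proof. set (U := KL b + 2 * g0 (b/4 - b/2)).
  destruct (Lx_big b (U + 4 * Rabs q * b + 1) (b/4) ltac:(lra)) as [u [Hu HY]].
  exists (2 * u). split. lra.
  assert (Hlow := J1_lower b (1/2) 0 Hb ltac:(lra) (2 * u) (DmG (2*u) ltac:(lra)) ltac:(lra)).
  unfold Ebd in Hlow. rewrite L1_0 in Hlow.
  replace (2 * u * (1 - 1/2) + 0) with u in Hlow by field.
  assert (Lx b (2 * u * (3/4 - 1/2) + 0) <= U).
  { apply Lx_ub. lra. rewrite Rabs_pos_eq; nra. }
  assert (E : (Lx b u - Lx b (2 * u * (3 / 4 - 1 / 2) + 0)) / (2 * u) >= (4 * Rabs q * b + 1) / b).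
  { apply Rle_ge. apply Rle_trans with ((4 * Rabs q * b + 1) / (2 * u)).
    - unfold Rdiv. apply Rmult_le_compat_l. pose proof (Rabs_pos q). nra.
      apply Rinv_le_contravar; lra.
    - unfold Rdiv. apply Rmult_le_compat_r. left; apply Rinv_0_lt_compat; lra. lra. }
  assert ((4 * Rabs q * b + 1) / b = 4 * Rabs q + / b) by (field; lra).
  pose proof (Rle_abs q). pose proof (Rinv_0_lt_compat b Hb). unfold G1. lra. Qed.

Lemma htilde_ex q : 0 < q -> exists h, 0 <= h < b /\ Derive (Gf b) h = q.
Proof. intros Hq. destruct (G1_big q) as [h1 [Hh1 Hq1]].
  destruct (Ranalysis5.IVT_interv (fun h => G1 h - q) 0 h1) as [h [Hh E]].
  - intros a Ha. apply continuity_pt_minus. apply cont_pt. apply (cJ1 b _ _ Hb). apply DmG; lra.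
    apply continuity_pt_const. intros ??; auto.
  - lra.
  - rewrite G1_0. lra.
  - lra.
  - exists h. split. lra. rewrite DGf by lra. lra. Qed.

Lemma htilde_spec q : 0 < q -> 0 <= htilde b q < b /\ Derive (Gf b) (htilde b q) = q.
Proof. intros Hq. unfold htilde. apply epsilon_spec. apply htilde_ex; auto. Qed.

Lemma htilde_G1 q : 0 < q -> G1 (htilde b q) = q.
Proof. intros Hq. destruct (htilde_spec q Hq) as [H1 H2]. rewrite DGf in H2 by lra. auto. Qed.

Lemma htilde_pos q : 0 < q -> 0 < htilde b q < b.
Proof. intros Hq. destruct (htilde_spec q Hq) as [H1 H2]. split; [|lra].
  destruct (proj1 H1) as [H|H]; auto. rewrite <- H in H2. rewrite DGf, G1_0 in H2 by lra. lra. Qed.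

Lemma htilde_uniq q h : 0 < q -> - b < h < b -> G1 h = q -> htilde b q = h.
Proof. intros Hq Hh E. pose proof (htilde_pos q Hq). apply (J1_inj b (1/2) 0 Hb ltac:(lra)).
  apply DmG; lra. apply DmG; lra. fold G1. rewrite htilde_G1; auto. Qed.

End GH.

Lemma recip_close Q D e : D <> 0 -> 0 < e -> Rabs (Q - D) < Rmin (Rabs D / 2) (e * D ^ 2 / 2) -> Rabs (/ Q - / D) < e.
Proof. intros HD He H. pose proof (Rmin_l (Rabs D / 2) (e * D ^ 2 / 2)) as M1. pose proof (Rmin_r (Rabs D / 2) (e * D ^ 2 / 2)) as M2.
  assert (HDa : 0 < Rabs D) by (apply Rabs_pos_lt; auto).
  assert (HQ : Rabs D / 2 < Rabs Q).
  { pose proof (Rabs_triang_inv D Q). rewrite <- Rabs_Ropp in H. replace (- (Q - D)) with (D - Q) in H by ring. lra. }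
  assert (HQ0 : Q <> 0) by (intro; subst; rewrite Rabs_R0 in HQ; lra).
  replace (/ Q - / D) with ((D - Q) / (Q * D)) by (field; auto).
  unfold Rdiv. rewrite Rabs_mult, Rabs_inv, Rabs_mult.
  rewrite <- Rabs_Ropp. replace (- (D - Q)) with (Q - D) by ring.
  apply Rmult_lt_reg_r with (Rabs Q * Rabs D). nra.
  rewrite Rmult_assoc, Rinv_l by nra. rewrite Rmult_1_r.
  assert (E2 : D ^ 2 = Rabs D * Rabs D) by (rewrite <- Rabs_mult; simpl; rewrite Rmult_1_r; rewrite Rabs_pos_eq; nra).
  assert (0 < e * ((Rabs Q - Rabs D / 2) * Rabs D)) by (apply Rmult_lt_0_compat; auto; apply Rmult_lt_0_compat; lra).
  assert (e * D ^ 2 / 2 < e * (Rabs Q * Rabs D)) by (rewrite E2; nra). lra. Qed.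

Lemma inv_der (phi dphi g : R -> R) (l u y0 r : R) :
  (forall x y, l < x -> x < y -> y < u -> phi x < phi y) ->
  (forall x, l < x < u -> is_derive phi x (dphi x)) ->
  0 < r ->
  (forall y, Rabs (y - y0) < r -> l < g y < u /\ phi (g y) = y) ->
  dphi (g y0) <> 0 ->
  continuous g y0 /\ is_derive g y0 (/ dphi (g y0)).
Proof. intros Hmon Hder Hr Hg HD.
  destruct (Hg y0 ltac:(rewrite Rminus_diag, Rabs_R0; lra)) as [Hx0 Hphi0].
  set (x0 := g y0) in *.
  assert (Hcont : forall eps, 0 < eps -> exists alp, 0 < alp /\ forall y, Rabs (y - y0) < alp -> Rabs (g y - x0) < eps).
  { intros eps Heps. set (e' := Rmin eps (Rmin (x0 - l) (u - x0)) / 2).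
    assert (He' : 0 < e' /\ e' < eps /\ e' < x0 - l /\ e' < u - x0).
    { unfold e'. pose proof (Rmin_l eps (Rmin (x0 - l) (u - x0))). pose proof (Rmin_r eps (Rmin (x0 - l) (u - x0))).
      pose proof (Rmin_l (x0 - l) (u - x0)). pose proof (Rmin_r (x0 - l) (u - x0)).
      assert (0 < Rmin eps (Rmin (x0 - l) (u - x0))) by (apply Rmin_pos; [lra| apply Rmin_pos; lra]). lra. }
    assert (Ha : phi (x0 - e') < y0) by (rewrite <- Hphi0; apply Hmon; lra).
    assert (Hb : y0 < phi (x0 + e')) by (rewrite <- Hphi0; apply Hmon; lra).
    exists (Rmin r (Rmin (y0 - phi (x0 - e')) (phi (x0 + e') - y0))). split.
    apply Rmin_pos; [lra| apply Rmin_pos; lra].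
    intros y Hy. pose proof (Rmin_l r (Rmin (y0 - phi (x0 - e')) (phi (x0 + e') - y0))).
    pose proof (Rmin_r r (Rmin (y0 - phi (x0 - e')) (phi (x0 + e') - y0))).
    pose proof (Rmin_l (y0 - phi (x0 - e')) (phi (x0 + e') - y0)). pose proof (Rmin_r (y0 - phi (x0 - e')) (phi (x0 + e') - y0)).
    destruct (Hg y ltac:(lra)) as [Hgy Hpy]. apply Rabs_def2 in Hy.
    apply Rabs_def1.
    - destruct (Rlt_or_le (g y - x0) e') as [?|H5]; [lra|].
      exfalso. destruct (Req_dec (g y) (x0 + e')) as [E|E].
      + rewrite E in Hpy. lra.
      + assert (phi (x0 + e') < phi (g y)) by (apply Hmon; lra). lra.
    - destruct (Rlt_or_le (- e') (g y - x0)) as [?|H5]; [lra|].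
      exfalso. destruct (Req_dec (g y) (x0 - e')) as [E|E].
      + rewrite E in Hpy. lra.
      + assert (phi (g y) < phi (x0 - e')) by (apply Hmon; lra). lra. }
  split.
  - apply cont_pt. intros eps Heps. destruct (Hcont eps Heps) as [alp [Halp H]].
    exists alp; split; auto. intros y [_ Hy]. unfold R_dist in *. unfold x0 in H. apply H; auto.
  - apply is_derive_Reals. intros eps Heps.
    set (D := dphi x0) in *.
    assert (He1 : 0 < Rmin (Rabs D / 2) (eps * D ^ 2 / 2)).
    { apply Rmin_pos. assert (0 < Rabs D) by (apply Rabs_pos_lt; auto). lra.
      assert (0 < D ^ 2) by (apply pow2_gt_0; auto). nra. }
    pose proof (proj1 (is_derive_Reals phi x0 D) (Hder x0 Hx0) _ He1) as [d1 Hd1].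
    destruct (Hcont d1 (cond_pos d1)) as [alp [Halp Hal]].
    assert (Hdel : 0 < Rmin alp r) by (apply Rmin_pos; lra).
    exists (mkposreal _ Hdel). intros h Hh0 Hh. simpl in Hh.
    pose proof (Rmin_l alp r). pose proof (Rmin_r alp r).
    assert (Hy : Rabs (y0 + h - y0) < r) by (replace (y0 + h - y0) with h by ring; lra).
    destruct (Hg (y0 + h) Hy) as [Hgy Hpy].
    set (k := g (y0 + h) - x0).
    assert (Hk0 : k <> 0). { intro E. unfold k in E. assert (g (y0 + h) = x0) by lra. rewrite H1, Hphi0 in Hpy. lra. }
    assert (Hk : Rabs k < d1) by (apply Hal; replace (y0 + h - y0) with h by ring; lra).
    specialize (Hd1 k Hk0 Hk).
    replace (x0 + k) with (g (y0 + h)) in Hd1 by (unfold k; ring). rewrite Hpy, Hphi0 in Hd1.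
    replace (y0 + h - y0) with h in Hd1 by ring.
    pose proof (recip_close (h / k) D eps HD Heps Hd1) as R.
    replace ((g (y0 + h) - g y0) / h) with (/ (h / k)) by (fold x0; unfold k; field; split; auto).
    unfold Rdiv in R |- *. exact R. Qed.

Definition interval (P : R -> Prop) := forall x y z, P x -> P y -> x <= z <= y -> P z.

Lemma conc_aux (f f' : R -> R) (P : R -> Prop) x y t : interval P ->
  (forall x, P x -> is_derive f x (f' x)) -> (forall x y, P x -> P y -> x < y -> f' y < f' x) ->
  P x -> P y -> x < y -> 0 < t < 1 -> t * f x + (1 - t) * f y < f (t * x + (1 - t) * y).
Proof. intros HI Hd Hdec Hx Hy Hxy Ht. set (z := t * x + (1 - t) * y).
  assert (Hz : x < z < y) by (unfold z; split; nra).
  destruct (MVT_cor2 f f' x z) as [c1 [E1 Hc1]]. lra.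
  { intros c Hc. apply is_derive_Reals, Hd. apply (HI x y); auto; lra. }
  destruct (MVT_cor2 f f' z y) as [c2 [E2 Hc2]]. lra.
  { intros c Hc. apply is_derive_Reals, Hd. apply (HI x y); auto; lra. }
  assert (f' c2 < f' c1) by (apply Hdec; try lra; apply (HI x y); auto; lra).
  assert (Ez1 : z - x = (1 - t) * (y - x)) by (unfold z; ring).
  assert (Ez2 : y - z = t * (y - x)) by (unfold z; ring).
  rewrite Ez1 in E1. rewrite Ez2 in E2.
  assert (0 < t * (1 - t) * (y - x)) by (apply Rmult_lt_0_compat; [apply Rmult_lt_0_compat|]; lra).
  nra. Qed.

Lemma conc_from_decr (f f' : R -> R) (P : R -> Prop) : interval P ->
  (forall x, P x -> is_derive f x (f' x)) -> (forall x y, P x -> P y -> x < y -> f' y < f' x) ->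
  strictly_concave_on f P.
Proof. intros HI Hd Hdec x y t Hx Hy Hxy Ht. destruct (Rtotal_order x y) as [H|[H|H]].
  - apply (conc_aux f f' P); auto.
  - contradiction.
  - replace (t * x + (1 - t) * y) with ((1 - t) * y + (1 - (1 - t)) * x) by ring.
    replace (t * f x + (1 - t) * f y) with ((1 - t) * f y + (1 - (1 - t)) * f x) by ring.
    apply (conc_aux f f' P); auto; lra. Qed.

Lemma decr_from_d2 (g g' : R -> R) (P : R -> Prop) a0 : interval P ->
  (forall x, P x -> continuous g x) ->
  (forall x, P x -> x <> a0 -> is_derive g x (g' x) /\ g' x < 0) ->
  forall x y, P x -> P y -> x < y -> g y < g x.
Proof. intros HI Hc Hd.
  assert (Aux : forall x y, P x -> P y -> x < y -> ~ (x < a0 < y) -> g y < g x).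
  { intros x y Hx Hy Hxy Ha.
    destruct (MVT_gen g x y (fun z => if Req_EM_T z a0 then -1 else g' z)) as [c [Hc' E]].
    - rewrite Rmin_left, Rmax_right by lra. intros z Hz. destruct (Req_EM_T z a0). exfalso; subst; lra.
      apply Hd. apply (HI x y); auto; lra. auto.
    - rewrite Rmin_left, Rmax_right by lra. intros z Hz. apply cont_pt, Hc. apply (HI x y); auto.
    - rewrite Rmin_left, Rmax_right in Hc' by lra.
      destruct (Req_EM_T c a0). nra.
      assert (g' c < 0) by (apply Hd; auto; apply (HI x y); auto). nra. }
  intros x y Hx Hy Hxy. destruct (Rlt_dec x a0) as [H1|H1]; destruct (Rlt_dec a0 y) as [H2|H2].
  - assert (P a0) by (apply (HI x y); auto; lra).
    apply Rlt_trans with (g a0); apply Aux; auto; lra.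
  - apply Aux; auto; lra.
  - apply Aux; auto; lra.
  - apply Aux; auto; lra. Qed.

Section Hs.
Variables b d : R.
Hypothesis Hb : 0 < b.
Hypothesis Hd : 0 < d < b.

Definition cH := d - b/2.
Definition Hone := J1 b 0 cH.
Definition Htwo := J2 b 0 cH.

Lemma DmH s : - d < s < b - d -> Dm b 0 cH s.
Proof. intros H; unfold Dm, dom, cH; split; split; lra. Qed.
Lemma DmH_inv s : Dm b 0 cH s -> - d < s < b - d.
Proof. unfold Dm, dom, cH; intros; lra. Qed.

Lemma Hf_eq s : - d < s < b - d -> Hf b d s = J0 b 0 cH s.
Proof. intros H. unfold Hf, J0, Jk. apply RInt_ext. rewrite Rmin_left, Rmax_right by lra.
  intros x Hx. simpl. rewrite Rmult_1_l, Rminus_0_r. unfold cH.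
  replace (s * x + d - b / 2) with (s * x + (d - b/2)) by ring. apply Lf_eq; auto. split; nra. Qed.

Lemma dHf s : - d < s < b - d -> is_derive (Hf b d) s (Hone s).
Proof. intros H. apply is_derive_ext_loc with (J0 b 0 cH).
  eapply filter_imp; [| apply (loc_int (- d) (b - d) s H)]. intros y Hy. symmetry; apply Hf_eq; auto.
  apply (dJ0 b 0 cH Hb). apply DmH; auto. Qed.

Lemma DHf s : - d < s < b - d -> Derive (Hf b d) s = Hone s.
Proof. intros; apply is_derive_unique, dHf; auto. Qed.

Lemma H1_incr s1 s2 : - d < s1 -> s1 < s2 -> s2 < b - d -> Hone s1 < Hone s2.
Proof. intros. apply J1_incr; auto. lra. apply DmH; lra. apply DmH; lra. Qed.

Definition MH := Rmax (Rabs cH) (Rmax ((b + d)/4) (b/2 - d/4)).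
Lemma MH_bd : 0 <= MH < b/2.
Proof. unfold MH, cH. split. eapply Rle_trans; [apply Rabs_pos| apply Rmax_l].
  apply Rmax_lub_lt. apply Rabs_def1; lra. apply Rmax_lub_lt; lra. Qed.
Definition UH := KL b + 2 * g0 (MH - b/2).

Lemma H1_big q : exists s, 0 < s < b - d /\ q < Hone s.
Proof. set (S := b - d). set (Y := UH + S * (4 * Rabs q + 4 * Rabs (L1 b cH) + 1)).
  set (m := Rmax 0 ((cH + b/2)/2)).
  assert (Hm : 0 <= m < b/2 /\ cH < m). { unfold m, cH. split. split. apply Rmax_l. apply Rmax_lub_lt; lra.
    apply Rlt_le_trans with ((d - b/2 + b/2)/2). lra. apply Rmax_r. }
  destruct (Lx_big b Y m ltac:(lra)) as [u [Hu HY]].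
  set (s := u - cH). assert (Hs : 0 < s < S) by (unfold s, S, cH in *; lra).
  exists s. split. auto.
  assert (Hlow := J1_lower b 0 cH Hb ltac:(lra) s (DmH s ltac:(unfold S in Hs; lra)) ltac:(lra)).
  unfold Ebd in Hlow. replace (s * (1 - 0) + cH) with u in Hlow by (unfold s; ring).
  assert (Lx b (s * (3/4 - 0) + cH) <= UH).
  { apply Lx_ub. apply MH_bd. unfold MH. apply Rabs_le. pose proof (Rle_abs cH). pose proof (Rle_abs (- cH)) as Z0.
    rewrite Rabs_Ropp in Z0. pose proof (Rmax_l (Rabs cH) (Rmax ((b + d)/4) (b/2 - d/4))).
    pose proof (Rmax_r (Rabs cH) (Rmax ((b + d)/4) (b/2 - d/4))). pose proof (Rmax_l ((b + d)/4) (b/2 - d/4)).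
    unfold S, cH in *. split; lra. }
  assert (Hk : 0 <= 4 * Rabs q + 4 * Rabs (L1 b cH) + 1) by (pose proof (Rabs_pos q); pose proof (Rabs_pos (L1 b cH)); lra).
  assert (E : (Lx b u - Lx b (s * (3 / 4 - 0) + cH)) / s >= 4 * Rabs q + 4 * Rabs (L1 b cH) + 1).
  { apply Rle_ge. apply Rle_trans with ((Y - UH) / s).
    - unfold Y. replace ((UH + S * (4 * Rabs q + 4 * Rabs (L1 b cH) + 1) - UH) / s)
        with ((4 * Rabs q + 4 * Rabs (L1 b cH) + 1) * (S / s)) by (field; lra).
      rewrite <- (Rmult_1_r (4 * Rabs q + 4 * Rabs (L1 b cH) + 1)) at 1.
      apply Rmult_le_compat_l; auto. apply Rmult_le_reg_r with s. lra. field_simplify; lra.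
    - unfold Rdiv. apply Rmult_le_compat_r. left; apply Rinv_0_lt_compat; lra. lra. }
  pose proof (Rle_abs q) as Z1. pose proof (Rle_abs (L1 b cH)) as Z2. pose proof (Rle_abs (- L1 b cH)) as Z3. rewrite Rabs_Ropp in Z3.
  unfold Hone. lra. Qed.

Lemma H1_small q : exists s, - d < s < 0 /\ Hone s < q.
Proof. set (Y := UH + d * (4 * Rabs q + 4 * Rabs (L1 b cH) + 1)).
  set (m := Rmax 0 ((- cH + b/2)/2)).
  assert (Hm : 0 <= m < b/2 /\ - cH < m). { unfold m, cH. split. split. apply Rmax_l. apply Rmax_lub_lt; lra.
    apply Rlt_le_trans with ((- (d - b/2) + b/2)/2). lra. apply Rmax_r. }
  destruct (Lx_big b Y m ltac:(lra)) as [u [Hu HY]].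
  set (s := - u - cH). assert (Hs : - d < s < 0) by (unfold s, cH in *; lra).
  exists s. split. auto.
  assert (Hup := J1_upper b 0 cH Hb ltac:(lra) s (DmH s ltac:(lra)) ltac:(lra)).
  unfold Ebd in Hup. replace (s * (1 - 0) + cH) with (- u) in Hup by (unfold s; ring). rewrite Lx_even in Hup.
  assert (Lx b (s * (3/4 - 0) + cH) <= UH).
  { apply Lx_ub. apply MH_bd. unfold MH. apply Rabs_le. pose proof (Rle_abs cH). pose proof (Rle_abs (- cH)) as Z0.
    rewrite Rabs_Ropp in Z0. pose proof (Rmax_l (Rabs cH) (Rmax ((b + d)/4) (b/2 - d/4))).
    pose proof (Rmax_r (Rabs cH) (Rmax ((b + d)/4) (b/2 - d/4))). pose proof (Rmax_r ((b + d)/4) (b/2 - d/4)).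
    unfold cH in *. split; lra. }
  assert (Hk : 0 <= 4 * Rabs q + 4 * Rabs (L1 b cH) + 1) by (pose proof (Rabs_pos q); pose proof (Rabs_pos (L1 b cH)); lra).
  assert (E : (Lx b u - Lx b (s * (3 / 4 - 0) + cH)) / s <= - (4 * Rabs q + 4 * Rabs (L1 b cH) + 1)).
  { set (A := Lx b u - Lx b (s * (3 / 4 - 0) + cH)).
    assert (HA : d * (4 * Rabs q + 4 * Rabs (L1 b cH) + 1) <= A) by (unfold A, Y in *; lra).
    apply Rmult_le_reg_r with (- s). lra.
    replace (A / s * - s) with (- A) by (field; lra).
    assert ((4 * Rabs q + 4 * Rabs (L1 b cH) + 1) * (- s) <= (4 * Rabs q + 4 * Rabs (L1 b cH) + 1) * d)
      by (apply Rmult_le_compat_l; lra). lra. }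
  pose proof (Rle_abs q) as Z1. pose proof (Rle_abs (- q)) as Z4. rewrite Rabs_Ropp in Z4.
  pose proof (Rle_abs (L1 b cH)) as Z2. pose proof (Rle_abs (- L1 b cH)) as Z3. rewrite Rabs_Ropp in Z3.
  unfold Hone. lra. Qed.

Lemma s_ex q : exists s, - d < s < b - d /\ Derive (Hf b d) s = q.
Proof. destruct (H1_small q) as [s1 [Hs1 Hq1]]. destruct (H1_big q) as [s2 [Hs2 Hq2]].
  destruct (Ranalysis5.IVT_interv (fun s => Hone s - q) s1 s2) as [s [Hs E]].
  - intros a Ha. apply continuity_pt_minus. apply cont_pt. apply (cJ1 b _ _ Hb). apply DmH; lra.
    apply continuity_pt_const. intros ??; auto.
  - lra.
  - lra.
  - lra.
  - exists s. split. lra. rewrite DHf by lra. lra. Qed.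

Lemma s_spec q : - d < s_delta b d q < b - d /\ Derive (Hf b d) (s_delta b d q) = q.
Proof. unfold s_delta. apply epsilon_spec. apply s_ex. Qed.

Lemma s_H1 q : Hone (s_delta b d q) = q.
Proof. destruct (s_spec q) as [H1' H2']. rewrite DHf in H2' by lra. auto. Qed.

Lemma s_uniq q s : - d < s < b - d -> Hone s = q -> s_delta b d q = s.
Proof. intros Hs E. destruct (s_spec q) as [Ha _]. apply (J1_inj b 0 cH Hb ltac:(lra)).
  apply DmH; lra. apply DmH; lra. fold Hone. rewrite s_H1; auto. Qed.

End Hs.

Lemma legendre_der (Phi sig : R -> R) q ds : is_derive Phi (sig q) q -> is_derive sig q ds ->
  is_derive (fun q => Phi (sig q) - q * sig q) q (- sig q).
Proof. intros H1 H2. pose proof (is_derive_comp Phi sig q q ds H1 H2) as H3.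
  assert (H4 : is_derive (fun q => q * sig q) q (1 * sig q + q * ds)).
  { pose proof (is_derive_mult (fun q => q) sig q 1 ds (is_derive_id q) H2 ltac:(intros; apply Rmult_comm)) as H.
    eapply der_eq. exact H. unfold plus, mult; simpl; ring. intros; reflexivity. }
  pose proof (is_derive_minus _ _ _ _ _ H3 H4) as H5.
  eapply der_eq. exact H5. unfold minus, plus, opp, scal; simpl; unfold mult; simpl; ring. intros; reflexivity. Qed.

Section Br.
Variables b d : R.
Hypothesis Hd : 0 < d < b.
Let Hb : 0 < b. Proof. lra. Qed.

Definition sG q := htilde b q.
Definition sH q := s_delta b d q.
Definition f1 q := Gf b (sG q) - q * sG q.
Definition f2 q := Hf b d (sH q) - q * sH q.

Lemma sG_der q : 0 < q -> continuous sG q /\ is_derive sG q (/ G2 b (sG q)).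
Proof. intros Hq. apply (inv_der (G1 b) (G2 b) sG (- b) b q q).
  - intros x y H1 H2 H3. apply G1_incr; auto.
  - intros x Hx. apply (dJ1 b (1/2) 0 Hb). apply DmG; auto.
  - auto.
  - intros y Hy. apply Rabs_def2 in Hy. pose proof (htilde_pos b Hb y ltac:(lra)).
    split. unfold sG; lra. apply htilde_G1; auto. lra.
  - pose proof (htilde_pos b Hb q Hq). apply Rgt_not_eq. apply (J2_pos b (1/2) 0 Hb ltac:(lra)).
    apply DmG. unfold sG; lra. Qed.

Lemma sH_der q : continuous sH q /\ is_derive sH q (/ Htwo b d (sH q)).
Proof. apply (inv_der (Hone b d) (Htwo b d) sH (- d) (b - d) q 1).
  - intros x y H1 H2 H3. apply H1_incr; auto.
  - intros x Hx. apply (dJ1 b 0 (cH b d) Hb). apply DmH; auto.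
  - lra.
  - intros y _. split. apply s_spec; auto. apply s_H1; auto.
  - pose proof (s_spec b d Hb Hd q) as [H _]. apply Rgt_not_eq. apply (J2_pos b 0 (cH b d) Hb ltac:(lra)).
    apply DmH; auto. Qed.

Lemma f1_der q : 0 < q -> is_derive f1 q (- sG q).
Proof. intros Hq. destruct (sG_der q Hq) as [_ H]. unfold f1. apply (legendre_der (Gf b) sG q (/ G2 b (sG q))); auto.
  pose proof (htilde_pos b Hb q Hq). pose proof (dGf b Hb (sG q) ltac:(unfold sG; lra)).
  unfold sG in *. rewrite htilde_G1 in H1; auto. Qed.

Lemma f2_der q : is_derive f2 q (- sH q).
Proof. destruct (sH_der q) as [_ H]. unfold f2. apply (legendre_der (Hf b d) sH q (/ Htwo b d (sH q))); auto.
  pose proof (s_spec b d Hb Hd q) as [Hs _]. pose proof (dHf b d Hb Hd (sH q) Hs).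
  unfold sH in *. rewrite s_H1 in H0; auto. Qed.

End Br.

Section Main.
Variables b d : R.
Hypothesis Hd : 0 < d < b.
Let Hb : 0 < b. Proof. lra. Qed.

Definition sig q := if Rle_dec d (delta0 b q) then sG b q else sH b d q.
Definition q0 := G1 b (b - 2 * d).

Lemma psi_unfold q : psi b q d = if Rle_dec d (delta0 b q) then f1 b q else f2 b d q.
Proof. reflexivity. Qed.

Lemma caseA q : b/2 <= d -> 0 < q -> ~ d <= delta0 b q.
Proof. intros H Hq. pose proof (htilde_pos b Hb q Hq). unfold delta0. lra. Qed.

Lemma q0_pos : d < b/2 -> 0 < q0.
Proof. intros H. unfold q0. rewrite <- (G1_0 b). apply G1_incr; lra. Qed.

Lemma caseB q : d < b/2 -> 0 < q -> (d <= delta0 b q <-> q <= q0).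
Proof. intros H Hq. pose proof (htilde_pos b Hb q Hq). unfold delta0, q0. split; intros H1.
  - rewrite <- (htilde_G1 b Hb q Hq). destruct (Req_dec (htilde b q) (b - 2 * d)) as [E|E].
    rewrite E; lra. left; apply G1_incr; lra.
  - destruct (Rle_dec (htilde b q) (b - 2 * d)). lra. exfalso.
    assert (Hx : G1 b (b - 2 * d) < G1 b (htilde b q)) by (apply G1_incr; lra).
    rewrite htilde_G1 in Hx; auto. lra. Qed.

Lemma sG_q0 : d < b/2 -> sG b q0 = b - 2 * d.
Proof. intros H. unfold sG. apply htilde_uniq; auto. apply q0_pos; auto. lra. Qed.

Lemma J1_shift h : 0 < h < b -> J1 b 0 (- h / 2) h = J1 b (1/2) 0 h.
Proof. intros Hh. unfold J1, Jk.
  assert (Hc : forall x, 0 <= x <= 1 -> dom b (h * (x - 1/2) + 0)).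
  { intros x Hx. unfold dom. split; nra. }
  transitivity (RInt (fun x => (x - 1/2) ^ 1 * L1 b (h * (x - 1/2) + 0) + (1/2) * L1 b (h * (x - 1/2) + 0)) 0 1).
  { apply RInt_ext. intros x _. replace (h * (x - 0) + - h / 2) with (h * (x - 1/2) + 0) by field. simpl; ring. }
  assert (E : RInt (fun x => 1/2 * L1 b (h * (x - 1/2) + 0)) 0 1 = 0).
  { rewrite (ftc (fun x => (1/2) * (Lx b (h * (x - 1/2) + 0) / h))); try lra.
    + replace (h * (0 - 1/2) + 0) with (- (h * (1 - 1/2) + 0)) by field. rewrite Lx_even. lra.
    + intros x Hx. pose proof (Lx_der b Hb _ (Hc x Hx)) as H1. apply (der_lin (1/2) 0) in H1.
      apply (is_derive_scal _ _ (1/2 * / h)) in H1. eapply der_eq. exact H1. Req; field; lra.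
      intros; simpl; field; lra.
    + intros x Hx. apply (cmul (fun _ => 1/2)). apply cconst. apply (ccomp (fun x => h * (x - 1/2) + 0)). apply clin.
      apply L1_cont; auto. }
  rewrite RInt_plusR. rewrite E. Req; ring.
  - apply (ex_J b). intros; apply L1_cont; auto. apply DmG; lra.
  - apply exR_c. lra. intros x Hx. apply (cmul (fun _ => 1/2)). apply cconst. apply (ccomp (fun x => h * (x - 1/2) + 0)). apply clin.
      apply L1_cont; auto.
Qed.

Lemma J0_shift h : J0 b 0 (- h / 2) h = J0 b (1/2) 0 h.
Proof. unfold J0, Jk. apply RInt_ext. intros x _. f_equal. f_equal. field. Qed.

Lemma sH_q0 : d < b/2 -> sH b d q0 = b - 2 * d.
Proof. intros H. unfold sH. apply s_uniq; auto. lra. unfold Hone, q0, cH.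
  replace (d - b/2) with (- (b - 2 * d) / 2) by field. apply J1_shift. lra. Qed.

Lemma f12_q0 : d < b/2 -> f1 b q0 = f2 b d q0.
Proof. intros H. unfold f1, f2. rewrite sG_q0, sH_q0 by auto. f_equal. f_equal.
  rewrite Gf_eq by lra. rewrite Hf_eq by lra. unfold cH.
  replace (d - b/2) with (- (b - 2 * d) / 2) by field. symmetry; apply J0_shift. Qed.

Lemma sG_cont q : 0 < q -> continuous (sG b) q.
Proof. intros H; apply (proj1 (sG_der b d Hd q H)). Qed.
Lemma sH_cont q : continuous (sH b d) q.
Proof. apply (proj1 (sH_der b d Hd q)). Qed.

Lemma sig_cont q : 0 < q -> continuous sig q.
Proof. intros Hq. destruct (Rle_dec (b/2) d) as [HA|HB].
  - apply continuous_ext_loc with (sH b d). eapply filter_imp; [|apply (loc_int 0 (q + 1) q ltac:(lra))].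
    intros y Hy. unfold sig. destruct (Rle_dec d (delta0 b y)); auto. exfalso; apply (caseA y); auto; lra.
    apply sH_cont.
  - assert (HB' : d < b/2) by lra. pose proof (q0_pos HB') as Hq0.
    destruct (Rtotal_order q q0) as [H|[H|H]].
    + apply continuous_ext_loc with (sG b). eapply filter_imp; [|apply (loc_int 0 q0 q ltac:(lra))].
      intros y Hy. unfold sig. destruct (Rle_dec d (delta0 b y)); auto. exfalso; apply n, caseB; auto; lra.
      apply sG_cont; lra.
    + subst q. apply continuous_ext_loc with (extension_cont (sG b) (sH b d) q0).
      eapply filter_imp; [|apply (loc_int 0 (q0 + 1) q0 ltac:(lra))].
      intros y Hy. unfold sig, extension_cont. destruct (Rle_dec d (delta0 b y)) as [r|r]; destruct (Rle_dec y q0) as [r'|r']; auto.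
      exfalso; apply r', caseB; auto; lra. exfalso; apply r, caseB; auto; lra.
      apply extension_cont_continuous. apply sG_cont; lra. apply sH_cont. rewrite sG_q0, sH_q0; auto.
    + apply continuous_ext_loc with (sH b d). eapply filter_imp; [|apply (loc_int q0 (q + 1) q ltac:(lra))].
      intros y Hy. unfold sig. destruct (Rle_dec d (delta0 b y)) as [r|r]; auto. exfalso. apply caseB in r; auto; lra.
      apply sH_cont. Qed.

Lemma psi_der q : 0 < q -> is_derive (fun q => psi b q d) q (- sig q).
Proof. intros Hq. destruct (Rle_dec (b/2) d) as [HA|HB].
  - assert (Hs : sig q = sH b d q). { unfold sig. destruct (Rle_dec d (delta0 b q)); auto. exfalso; apply (caseA q); auto. }
    rewrite Hs. apply is_derive_ext_loc with (f2 b d). eapply filter_imp; [|apply (loc_int 0 (q + 1) q ltac:(lra))].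
    intros y Hy. rewrite psi_unfold. destruct (Rle_dec d (delta0 b y)); auto. exfalso; apply (caseA y); auto; lra.
    apply (f2_der b d Hd).
  - assert (HB' : d < b/2) by lra. pose proof (q0_pos HB') as Hq0.
    destruct (Rtotal_order q q0) as [H|[H|H]].
    + assert (Hs : sig q = sG b q). { unfold sig. destruct (Rle_dec d (delta0 b q)); auto. exfalso; apply n, caseB; auto; lra. }
      rewrite Hs. apply is_derive_ext_loc with (f1 b). eapply filter_imp; [|apply (loc_int 0 q0 q ltac:(lra))].
      intros y Hy. rewrite psi_unfold. destruct (Rle_dec d (delta0 b y)); auto. exfalso; apply n, caseB; auto; lra.
      apply (f1_der b d Hd); auto.
    + subst q. assert (Hs : sig q0 = sG b q0). { unfold sig. destruct (Rle_dec d (delta0 b q0)); auto. exfalso; apply n, caseB; auto; lra. }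
      rewrite Hs. apply is_derive_ext_loc with (extension_cont (f1 b) (f2 b d) q0).
      eapply filter_imp; [|apply (loc_int 0 (q0 + 1) q0 ltac:(lra))].
      intros y Hy. rewrite psi_unfold. unfold extension_cont. destruct (Rle_dec d (delta0 b y)) as [r|r]; destruct (Rle_dec y q0) as [r'|r']; auto.
      exfalso; apply r', caseB; auto; lra. exfalso; apply r, caseB; auto; lra.
      apply extension_cont_is_derive. apply (f1_der b d Hd); auto. rewrite sG_q0 by auto. rewrite <- (sH_q0 HB'). apply (f2_der b d Hd).
      apply f12_q0; auto.
    + assert (Hs : sig q = sH b d q). { unfold sig. destruct (Rle_dec d (delta0 b q)) as [r|r]; auto. exfalso. apply caseB in r; auto; lra. }
      rewrite Hs. apply is_derive_ext_loc with (f2 b d). eapply filter_imp; [|apply (loc_int q0 (q + 1) q ltac:(lra))].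
      intros y Hy. rewrite psi_unfold. destruct (Rle_dec d (delta0 b y)) as [r|r]; auto. exfalso. apply caseB in r; auto; lra.
      apply (f2_der b d Hd). Qed.

End Main.

Lemma inv2_der a : 0 < a -> is_derive (fun a => 1 / a ^ 2) a (-2 / a ^ 3).
Proof. intros Ha. auto_derive. nz. Req; field; lra. Qed.

Lemma Tform_der (Pf s : R -> R) a C : 0 < a -> is_derive Pf (1 / a ^ 2) (- s (1 / a ^ 2)) ->
  is_derive (fun a => a * C + a * Pf (1 / a ^ 2)) a (C + Pf (1 / a ^ 2) + 2 * s (1 / a ^ 2) / a ^ 2).
Proof. intros Ha H. pose proof (is_derive_comp Pf (fun a => 1 / a ^ 2) a _ _ H (inv2_der a Ha)) as H1.
  assert (H2 : is_derive (fun a => a * C) a C) by (auto_derive; auto; Req; ring).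
  pose proof (is_derive_mult (fun a => a) (fun a => Pf (1 / a ^ 2)) a _ _ (is_derive_id a) H1 ltac:(intros; apply Rmult_comm)) as H3.
  pose proof (is_derive_plus _ _ _ _ _ H2 H3) as H4.
  eapply der_eq. exact H4. unfold plus, mult, scal, one; simpl; unfold mult; simpl. Req; field; lra. intros; reflexivity. Qed.

Lemma T1form_der (Pf s : R -> R) ds a C : 0 < a -> is_derive Pf (1 / a ^ 2) (- s (1 / a ^ 2)) ->
  is_derive s (1 / a ^ 2) ds ->
  is_derive (fun a => C + Pf (1 / a ^ 2) + 2 * s (1 / a ^ 2) / a ^ 2) a (-2 * s (1 / a ^ 2) / a ^ 3 - 4 * ds / a ^ 5).
Proof. intros Ha H Hs. pose proof (is_derive_comp Pf (fun a => 1 / a ^ 2) a _ _ H (inv2_der a Ha)) as H1.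
  pose proof (is_derive_comp s (fun a => 1 / a ^ 2) a _ _ Hs (inv2_der a Ha)) as H2.
  assert (H3 : is_derive (fun a => 2 / a ^ 2) a (-4 / a ^ 3)) by (auto_derive; [nz| Req; field; lra]).
  pose proof (is_derive_mult (fun a => s (1 / a ^ 2)) (fun a => 2 / a ^ 2) a _ _ H2 H3 ltac:(intros; apply Rmult_comm)) as H4.
  pose proof (is_derive_plus _ _ _ _ _ (is_derive_const C a) H1) as H5.
  pose proof (is_derive_plus _ _ _ _ _ H5 H4) as H6.
  eapply der_eq. exact H6. unfold plus, mult, scal, zero; simpl; unfold mult; simpl. Req; field; lra.
  intros t; unfold plus, mult; simpl. Req. unfold Rdiv; ring. Qed.

Lemma glb_ray (E : R -> Prop) m : (forall q, E q -> m <= q) -> (forall q, m < q -> E q) -> Glb_Rbar E = Finite m.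
Proof. intros H1 H2. apply is_glb_Rbar_unique. split.
  - intros x Hx. simpl. auto.
  - intros l Hl. destruct l as [r| |]; simpl; auto.
    + destruct (Rle_dec r m) as [H|H]; auto. exfalso.
      assert (E ((r + m) / 2)) by (apply H2; lra). specialize (Hl _ H0). simpl in Hl. lra.
    + specialize (Hl (m + 1) (H2 (m + 1) ltac:(lra))). simpl in Hl. auto. Qed.

Lemma sqrt_rel q a : 0 < q -> 0 < a -> (1 / a ^ 2 < q <-> 1 / sqrt q < a) /\ (1 / a ^ 2 = q <-> a = 1 / sqrt q).
Proof. intros Hq Ha. pose proof (sqrt_lt_R0 q Hq) as Hr. pose proof (sqrt_sqrt q ltac:(lra)) as Hs.
  set (r := sqrt q) in *. clearbody r. assert (Hq' : q = r * r) by lra. subst q.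
  assert (HA : 0 < a ^ 2) by (apply pow_lt; lra).
  assert (E1 : 1 / a ^ 2 < r * r <-> 1 < (a * r) ^ 2).
  { replace ((a * r) ^ 2) with ((r * r) * a ^ 2) by ring. split; intros H.
    - apply Rmult_lt_compat_r with (r := a ^ 2) in H; auto. replace (1 / a ^ 2 * a ^ 2) with 1 in H by (field; lra). lra.
    - apply Rmult_lt_reg_r with (a ^ 2); auto. replace (1 / a ^ 2 * a ^ 2) with 1 by (field; lra). lra. }
  assert (E2 : 1 / r < a <-> 1 < a * r).
  { split; intros H. apply Rmult_lt_compat_r with (r := r) in H; auto. field_simplify in H; lra.
    apply Rmult_lt_reg_r with r; auto. field_simplify; lra. }
  split.
  - rewrite E1, E2. assert (0 < a * r) by nra. split; intros; nra.
  - split; intros H.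
    + assert (a ^ 2 * (r * r) = 1) by (rewrite <- H; field; lra).
      assert (Hp : 0 < a * r) by (apply Rmult_lt_0_compat; lra).
      assert (E3 : (a * r - 1) * (a * r + 1) = 0) by (replace ((a*r-1)*(a*r+1)) with (a^2*(r*r) - 1) by ring; lra).
      apply Rmult_integral in E3. assert (a * r = 1) by (destruct E3; lra).
      apply Rmult_eq_reg_r with r; try lra. field_simplify; lra.
    + subst a. field. lra. Qed.

Lemma T2_sign a s J1v J2v B : 0 < a -> 0 < J2v -> J1v = 1 / a ^ 2 -> s * J2v + 2 * J1v = B ->
  -2 * s / a ^ 3 - 4 * / J2v / a ^ 5 = - (2 / a ^ 3) * (B / J2v).
Proof. intros Ha HJ E1 E2. subst B. subst J1v. field. lra. Qed.

Lemma cinv (f : R -> R) x : continuous f x -> f x <> 0 -> continuous (fun y => / f y) x.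
Proof. intros H1 H2. apply cont_pt. apply cont_pt in H1. exact (continuity_pt_inv f x H1 H2). Qed.

Lemma cpow_inv n a : 0 < a -> continuous (fun a => / a ^ n) a.
Proof. intros Ha. apply (ex_derive_continuous (K:=R_AbsRing) (V:=R_NormedModule)). auto_derive.
  apply pow_nonzero; lra. Qed.

Lemma cinv2 a : 0 < a -> continuous (fun a => 1 / a ^ 2) a.
Proof. intros Ha. eapply cder. apply inv2_der; auto. Qed.

Lemma C2_local (f f1 g g2 : R -> R) lo hi a : lo < a < hi ->
  (forall y, lo < y < hi -> is_derive f y (f1 y)) -> (forall y, lo < y < hi -> f1 y = g y) ->
  (forall y, lo < y < hi -> is_derive g y (g2 y)) -> continuous g2 a ->
  ex_derive f a /\ ex_derive (Derive f) a /\ continuous (Derive (Derive f)) a.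
Proof. intros Ha Hf Heq Hg Hc.
  assert (DD : forall y, lo < y < hi -> is_derive (Derive f) y (g2 y)).
  { intros y Hy. apply is_derive_ext_loc with g; [|apply Hg; auto].
    eapply filter_imp; [|apply (loc_int lo hi y Hy)]. intros z Hz. rewrite (is_derive_unique _ _ _ (Hf z Hz)). symmetry; apply Heq; auto. }
  split. eexists; apply Hf; auto. split. eexists; apply DD; auto.
  apply continuous_ext_loc with g2; auto.
  eapply filter_imp; [|apply (loc_int lo hi a Ha)]. intros z Hz. symmetry. apply is_derive_unique, DD; auto. Qed.

Section T.
Variables b d : R.
Hypothesis Hd : 0 < d < b.
Let Hb : 0 < b. Proof. lra. Qed.

Definition T1 a := ln (Gamma b) + psi b (1 / a ^ 2) d + 2 * sig b d (1 / a ^ 2) / a ^ 2.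
Definition T1G a := ln (Gamma b) + f1 b (1 / a ^ 2) + 2 * sG b (1 / a ^ 2) / a ^ 2.
Definition T1H a := ln (Gamma b) + f2 b d (1 / a ^ 2) + 2 * sH b d (1 / a ^ 2) / a ^ 2.
Definition T2G a := -2 * sG b (1 / a ^ 2) / a ^ 3 - 4 * / G2 b (sG b (1 / a ^ 2)) / a ^ 5.
Definition T2H a := -2 * sH b d (1 / a ^ 2) / a ^ 3 - 4 * / Htwo b d (sH b d (1 / a ^ 2)) / a ^ 5.

Lemma inv2_pos a : 0 < a -> 0 < 1 / a ^ 2.
Proof. intros; apply Rdiv_lt_0_compat; [lra| apply pow_lt; lra]. Qed.

Lemma T_der a : 0 < a -> is_derive (T b d) a (T1 a).
Proof. intros Ha. unfold T, T1. apply (Tform_der (fun q => psi b q d) (sig b d)); auto.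
  apply psi_der; auto. apply inv2_pos; auto. Qed.

Lemma T1_cont a : 0 < a -> continuous T1 a.
Proof. intros Ha. unfold T1. apply cplus. apply cplus. apply cconst.
  apply (ccomp (fun a => 1 / a ^ 2) (fun q => psi b q d)). apply cinv2; auto.
  eapply cder. apply psi_der; auto. apply inv2_pos; auto.
  apply (cmul (fun a => 2 * sig b d (1 / a ^ 2)) (fun a => / a ^ 2)).
  apply (cmul (fun _ => 2)). apply cconst. apply (ccomp (fun a => 1 / a ^ 2) (sig b d)). apply cinv2; auto.
  apply sig_cont; auto. apply inv2_pos; auto. apply cpow_inv; auto. Qed.

Lemma T1G_der a : 0 < a -> is_derive T1G a (T2G a).
Proof. intros Ha. unfold T1G, T2G. pose proof (inv2_pos a Ha). apply T1form_der; auto.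
  apply (f1_der b d Hd); auto. apply (sG_der b d Hd); auto. Qed.
Lemma T1H_der a : 0 < a -> is_derive T1H a (T2H a).
Proof. intros Ha. unfold T1H, T2H. apply T1form_der; auto.
  apply (f2_der b d Hd). apply (sH_der b d Hd). Qed.

Lemma sG_rng q : 0 < q -> 0 < sG b q < b.
Proof. intros; apply htilde_pos; auto. Qed.
Lemma sH_rng q : - d < sH b d q < b - d.
Proof. apply s_spec; auto. Qed.

Lemma T2G_cont a : 0 < a -> continuous T2G a.
Proof. intros Ha. pose proof (inv2_pos a Ha). pose proof (sG_rng _ H) as Hr. unfold T2G. apply cminus.
  - apply (cmul (fun a => -2 * sG b (1 / a ^ 2)) (fun a => / a ^ 3)).
    apply (cmul (fun _ => -2)). apply cconst. apply (ccomp (fun a => 1 / a ^ 2) (sG b)). apply cinv2; auto.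
    apply (sG_der b d Hd); auto. apply cpow_inv; auto.
  - apply (cmul (fun a => 4 * / G2 b (sG b (1 / a ^ 2))) (fun a => / a ^ 5)). 2: apply cpow_inv; auto.
    apply (cmul (fun _ => 4)). apply cconst. apply (cinv (fun a => G2 b (sG b (1 / a ^ 2)))).
    apply (ccomp (fun a => sG b (1 / a ^ 2)) (G2 b)). apply (ccomp (fun a => 1 / a ^ 2) (sG b)). apply cinv2; auto.
    apply (sG_der b d Hd); auto. apply (cJ2 b (1/2) 0 Hb). apply DmG; lra.
    apply Rgt_not_eq. apply (J2_pos b (1/2) 0 Hb ltac:(lra)). apply DmG; lra. Qed.

Lemma T2H_cont a : 0 < a -> continuous T2H a.
Proof. intros Ha. pose proof (inv2_pos a Ha). pose proof (sH_rng (1 / a ^ 2)) as Hr. unfold T2H. apply cminus.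
  - apply (cmul (fun a => -2 * sH b d (1 / a ^ 2)) (fun a => / a ^ 3)).
    apply (cmul (fun _ => -2)). apply cconst. apply (ccomp (fun a => 1 / a ^ 2) (sH b d)). apply cinv2; auto.
    apply (sH_der b d Hd). apply cpow_inv; auto.
  - apply (cmul (fun a => 4 * / Htwo b d (sH b d (1 / a ^ 2))) (fun a => / a ^ 5)). 2: apply cpow_inv; auto.
    apply (cmul (fun _ => 4)). apply cconst. apply (cinv (fun a => Htwo b d (sH b d (1 / a ^ 2)))).
    apply (ccomp (fun a => sH b d (1 / a ^ 2)) (Htwo b d)). apply (ccomp (fun a => 1 / a ^ 2) (sH b d)). apply cinv2; auto.
    apply (sH_der b d Hd). apply (cJ2 b 0 (cH b d) Hb). apply DmH; auto.
    apply Rgt_not_eq. apply (J2_pos b 0 (cH b d) Hb ltac:(lra)). apply DmH; auto. Qed.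

Lemma T2G_neg a : 0 < a -> T2G a < 0.
Proof. intros Ha. pose proof (inv2_pos a Ha) as Hq. set (q := 1 / a ^ 2) in *.
  pose proof (sG_rng q Hq) as Hr. set (h := sG b q) in *.
  assert (HD : Dm b (1/2) 0 h) by (apply DmG; lra).
  assert (HJ2 : 0 < G2 b h) by (apply (J2_pos b (1/2) 0 Hb ltac:(lra)); auto).
  assert (HJ1 : G1 b h = q) by (apply htilde_G1; auto).
  pose proof (J_ident b (1/2) 0 Hb h HD) as HI.
  unfold T2G. fold q. fold h.
  rewrite (T2_sign a h (G1 b h) (G2 b h) (Bd b (1/2) 0 h)); auto.
  assert (0 < Bd b (1/2) 0 h).
  { unfold Bd. assert (0 < L1 b (h * (1 - 1/2) + 0)) by (apply L1_pos; auto; lra).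
    assert (L1 b (h * (0 - 1/2) + 0) < 0) by (apply L1_neg; lra). nra. }
  assert (0 < 2 / a ^ 3) by (apply Rdiv_lt_0_compat; [lra| apply pow_lt; lra]).
  assert (0 < Bd b (1/2) 0 h / G2 b h) by (apply Rdiv_lt_0_compat; lra). nra. Qed.

Lemma T2H_eq a : 0 < a -> T2H a = - (2 / a ^ 3) * (L1 b (sH b d (1 / a ^ 2) + cH b d) / Htwo b d (sH b d (1 / a ^ 2))).
Proof. intros Ha. pose proof (inv2_pos a Ha) as Hq. set (q := 1 / a ^ 2) in *.
  pose proof (sH_rng q) as Hr. set (s := sH b d q) in *.
  assert (HD : Dm b 0 (cH b d) s) by (apply DmH; auto).
  assert (HJ2 : 0 < Htwo b d s) by (apply (J2_pos b 0 (cH b d) Hb ltac:(lra)); auto).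
  assert (HJ1 : Hone b d s = q) by (apply s_H1; auto).
  pose proof (J_ident b 0 (cH b d) Hb s HD) as HI.
  unfold T2H. fold q. fold s.
  rewrite (T2_sign a s (Hone b d s) (Htwo b d s) (Bd b 0 (cH b d) s)); auto.
  unfold Bd. f_equal. f_equal. replace (s * (1 - 0) + cH b d) with (s + cH b d) by ring. ring. Qed.

End T.

Section Fin.
Variables b d : R.
Hypothesis Hd : 0 < d < b.
Let Hb : 0 < b. Proof. lra. Qed.

Lemma T1_A a : b/2 <= d -> 0 < a -> T1 b d a = T1H b d a.
Proof. intros H Ha. pose proof (inv2_pos a Ha). unfold T1, T1H, sig. rewrite psi_unfold.
  destruct (Rle_dec d (delta0 b (1 / a ^ 2))) as [r|r]; auto. exfalso; apply (caseA b d Hd (1 / a ^ 2)); auto. Qed.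

Lemma T1_BG a : d < b/2 -> 0 < a -> 1 / sqrt (q0 b d) < a -> T1 b d a = T1G b a.
Proof. intros H Ha Ha0. pose proof (inv2_pos a Ha). pose proof (q0_pos b d Hd H).
  destruct (sqrt_rel (q0 b d) a H1 Ha) as [[_ E] _]. apply E in Ha0.
  unfold T1, T1G, sig. rewrite psi_unfold.
  destruct (Rle_dec d (delta0 b (1 / a ^ 2))) as [r|r]; auto. exfalso; apply r. apply (caseB b d Hd); auto; lra. Qed.

Lemma T1_BH a : d < b/2 -> 0 < a -> a < 1 / sqrt (q0 b d) -> T1 b d a = T1H b d a.
Proof. intros H Ha Ha0. pose proof (inv2_pos a Ha). pose proof (q0_pos b d Hd H).
  destruct (sqrt_rel (q0 b d) a H1 Ha) as [[E1 _] [E2 _]].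
  assert (q0 b d < 1 / a ^ 2).
  { destruct (Rtotal_order (1 / a ^ 2) (q0 b d)) as [h|[h|h]]; auto.
    apply E1 in h; lra. apply E2 in h; lra. }
  unfold T1, T1H, sig. rewrite psi_unfold.
  destruct (Rle_dec d (delta0 b (1 / a ^ 2))) as [r|r]; auto. exfalso. apply (caseB b d Hd) in r; auto; lra. Qed.

Definition qs := Hone b d (b/2 - d).

Lemma arg_qs x : 0 <= x <= 1 -> (b/2 - d) * (x - 0) + cH b d = (b/2 - d) * (x - 1).
Proof. intros; unfold cH; ring. Qed.

Lemma qs_le0 : d <= b/2 -> qs <= 0.
Proof. intros H. unfold qs, Hone, J1, Jk.
  apply Rle_trans with (RInt (fun _ => 0) 0 1).
  2: { rewrite RInt_const. unfold scal; simpl; unfold mult; simpl. lra. }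
  apply RInt_le. lra. apply (ex_J b). intros; apply L1_cont; auto. apply DmH; auto; lra.
  apply exR_c. lra. intros; apply cconst.
  intros x Hx. rewrite arg_qs by lra.
  assert (L1 b ((b/2 - d) * (x - 1)) <= L1 b 0).
  { apply L1_le; unfold dom; try nra. }
  rewrite L1_0 in H0. simpl. nra. Qed.

Lemma qs_pos : b/2 < d -> 0 < qs.
Proof. intros H. unfold qs, Hone, J1, Jk. apply RInt_gt_0. lra.
  - intros x Hx. rewrite arg_qs by lra. simpl. rewrite Rmult_1_r. apply Rmult_lt_0_compat. lra.
    apply L1_pos; auto. nra.
  - intros x Hx. apply (int_cont b). intros; apply L1_cont; auto. apply (arg_in b 0 (cH b d)); auto. apply DmH; auto; lra. Qed.

Lemma sH_gt q : qs < q -> b/2 - d < sH b d q.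
Proof. intros H. pose proof (sH_rng b d Hd q).
  destruct (Rlt_le_dec (b/2 - d) (sH b d q)) as [h|h]; auto. exfalso.
  assert (Hone b d (sH b d q) <= qs).
  { unfold qs. destruct h as [h|h]. left; apply H1_incr; auto; lra. rewrite h; lra. }
  unfold sH in H1. rewrite s_H1 in H1; auto. lra. Qed.

Lemma sH_lt q : q < qs -> sH b d q < b/2 - d.
Proof. intros H. pose proof (sH_rng b d Hd q).
  destruct (Rlt_le_dec (sH b d q) (b/2 - d)) as [h|h]; auto. exfalso.
  assert (qs <= Hone b d (sH b d q)).
  { unfold qs. destruct h as [h|h]. left; apply H1_incr; auto; lra. rewrite h; lra. }
  unfold sH in H1. rewrite s_H1 in H1; auto. lra. Qed.

Lemma T2H_neg a : 0 < a -> qs < 1 / a ^ 2 -> T2H b d a < 0.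
Proof. intros Ha Hq. rewrite T2H_eq; auto. pose proof (sH_gt _ Hq) as Y1. pose proof (sH_rng b d Hd (1 / a ^ 2)) as Y2.
  assert (Z1 : 0 < L1 b (sH b d (1 / a ^ 2) + cH b d)) by (apply L1_pos; auto; unfold cH; lra).
  assert (Z2 : 0 < Htwo b d (sH b d (1 / a ^ 2))) by (apply (J2_pos b 0 (cH b d) Hb ltac:(lra)); apply DmH; auto).
  assert (Z3 : 0 < 2 / a ^ 3) by (apply Rdiv_lt_0_compat; [lra| apply pow_lt; lra]).
  assert (Z4 : 0 < L1 b (sH b d (1 / a ^ 2) + cH b d) / Htwo b d (sH b d (1 / a ^ 2))) by (apply Rdiv_lt_0_compat; lra). nra. Qed.

Lemma T2H_pos a : 0 < a -> 1 / a ^ 2 < qs -> 0 < T2H b d a.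
Proof. intros Ha Hq. rewrite T2H_eq; auto. pose proof (sH_lt _ Hq) as Y1. pose proof (sH_rng b d Hd (1 / a ^ 2)) as Y2.
  assert (Z5 : L1 b (sH b d (1 / a ^ 2) + cH b d) < 0) by (apply L1_neg; auto; unfold cH; lra).
  assert (Z6 : 0 < Htwo b d (sH b d (1 / a ^ 2))) by (apply (J2_pos b 0 (cH b d) Hb ltac:(lra)); apply DmH; auto).
  assert (Z7 : 0 < 2 / a ^ 3) by (apply Rdiv_lt_0_compat; [lra| apply pow_lt; lra]).
  assert (Z8 : 0 < (- L1 b (sH b d (1 / a ^ 2) + cH b d)) / Htwo b d (sH b d (1 / a ^ 2))) by (apply Rdiv_lt_0_compat; lra).
  replace (L1 b (sH b d (1 / a ^ 2) + cH b d) / Htwo b d (sH b d (1 / a ^ 2))) with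
    (- ((- L1 b (sH b d (1 / a ^ 2) + cH b d)) / Htwo b d (sH b d (1 / a ^ 2)))) by (field; lra).
  nra. Qed.

End Fin.

Lemma der_opp (f : R -> R) x l : is_derive f x l -> is_derive (fun x => - f x) x (- l).
Proof. intros H. apply (is_derive_opp f x l) in H. exact H. Qed.

Section Fin2.
Variables b d : R.
Hypothesis Hd : 0 < d < b.
Let Hb : 0 < b. Proof. lra. Qed.

Lemma qdelta_eq : d < b/2 -> q_delta b d = q0 b d.
Proof. intros H. pose proof (q0_pos b d Hd H). unfold q_delta. rewrite (glb_ray _ (q0 b d)). reflexivity.
  - intros q [Hq Hq']. destruct (Rle_dec (q0 b d) q) as [r|r]; auto. exfalso.
    assert (d <= delta0 b q) by (apply (caseB b d Hd); auto; lra). lra.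
  - intros q Hq. split. lra. destruct (Rlt_dec (delta0 b q) d) as [r|r]; auto. exfalso.
    assert (d <= delta0 b q) by lra. apply (caseB b d Hd) in H1; auto; lra. Qed.

Lemma qstar_0 : d <= b/2 -> qstar_delta b d = 0.
Proof. intros H. pose proof (qs_le0 b d Hd H). unfold qstar_delta. rewrite (glb_ray _ 0). reflexivity.
  - intros q [Hq _]; lra.
  - intros q Hq. split; auto. pose proof (sH_gt b d Hd q ltac:(lra)). unfold sH in H1. lra. Qed.

Lemma qstar_qs : b/2 < d -> qstar_delta b d = qs b d.
Proof. intros H. pose proof (qs_pos b d Hd H). unfold qstar_delta. rewrite (glb_ray _ (qs b d)). reflexivity.
  - intros q [Hq Hq']. destruct (Rle_dec (qs b d) q) as [r|r]; auto. exfalso.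
    pose proof (sH_lt b d Hd q ltac:(lra)). unfold sH in H1. lra.
  - intros q Hq. split. lra. pose proof (sH_gt b d Hd q Hq). unfold sH in H1. lra. Qed.

Lemma DT_loc a : 0 < a -> locally a (fun y => T1 b d y = Derive (T b d) y).
Proof. intros Ha. eapply filter_imp; [|apply (loc_int 0 (a + 1) a ltac:(lra))].
  intros y Hy. symmetry. apply is_derive_unique, T_der; auto. lra. Qed.

Lemma C1 : C1_on (T b d) (fun a => 0 < a).
Proof. intros a Ha. split. eexists; apply T_der; auto.
  apply continuous_ext_loc with (T1 b d). apply DT_loc; auto. apply T1_cont; auto. Qed.

Lemma T1_der_reg (Ti T2i : R -> R) lo hi y : 0 <= lo -> lo < y < hi ->
  (forall z, lo < z < hi -> T1 b d z = Ti z) -> is_derive Ti y (T2i y) -> is_derive (T1 b d) y (T2i y).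
Proof. intros Hlo Hy Heq H. apply is_derive_ext_loc with Ti; auto.
  eapply filter_imp; [|apply (loc_int lo hi y Hy)]. intros z Hz. symmetry; apply Heq; auto. Qed.

Lemma C2_reg (Ti T2i : R -> R) lo hi a : 0 <= lo -> lo < a < hi ->
  (forall z, lo < z < hi -> T1 b d z = Ti z) -> (forall z, lo < z < hi -> is_derive Ti z (T2i z)) -> continuous T2i a ->
  ex_derive (T b d) a /\ ex_derive (Derive (T b d)) a /\ continuous (Derive (Derive (T b d))) a.
Proof. intros Hlo Ha Heq Hd2 Hc. apply (C2_local (T b d) (T1 b d) Ti T2i lo hi a); auto.
  intros y Hy. apply T_der; lra. Qed.

Lemma int_pos : interval (fun a => 0 < a).
Proof. intros x y z Hx Hy Hz; lra. Qed.

Lemma conc_all : d <= b/2 -> strictly_concave_on (T b d) (fun a => 0 < a).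
Proof. intros H. apply (conc_from_decr (T b d) (T1 b d)). apply int_pos.
  intros; apply T_der; auto.
  set (a0 := if Rlt_dec d (b/2) then 1 / sqrt (q0 b d) else -1).
  apply (decr_from_d2 (T1 b d) (Derive (T1 b d)) (fun a => 0 < a) a0). apply int_pos.
  intros; apply T1_cont; auto.
  intros y Hy Hne.
  assert (Hv : exists v, is_derive (T1 b d) y v /\ v < 0).
  { unfold a0 in Hne. destruct (Rlt_dec d (b/2)) as [HB|HB].
    - pose proof (q0_pos b d Hd HB). pose proof (sqrt_lt_R0 _ H0).
      assert (0 < 1 / sqrt (q0 b d)) by (apply Rdiv_lt_0_compat; lra).
      destruct (Rtotal_order y (1 / sqrt (q0 b d))) as [h|[h|h]]; [| contradiction |].
      + exists (T2H b d y). split. apply (T1_der_reg (T1H b d) (T2H b d) 0 (1 / sqrt (q0 b d))); auto; try lra.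
        intros z Hz; apply T1_BH; auto; lra. apply T1H_der; auto.
        apply T2H_neg; auto. pose proof (qs_le0 b d Hd H). pose proof (inv2_pos y Hy). lra.
      + exists (T2G b y). split. apply (T1_der_reg (T1G b) (T2G b) (1 / sqrt (q0 b d)) (y + 1)); auto; try lra.
        intros z Hz; apply T1_BG; auto; lra. apply (T1G_der b d Hd); auto. apply (T2G_neg b d Hd); auto.
    - exists (T2H b d y). split. apply (T1_der_reg (T1H b d) (T2H b d) 0 (y + 1)); auto; try lra.
      intros z Hz; apply T1_A; auto; lra. apply T1H_der; auto.
      apply T2H_neg; auto. pose proof (qs_le0 b d Hd H). pose proof (inv2_pos y Hy). lra. }
  destruct Hv as [v [Hv1 Hv2]]. rewrite (is_derive_unique _ _ _ Hv1). auto. Qed.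

Lemma conc_part : b/2 < d -> strictly_concave_on (T b d) (fun a => 0 < a < 1 / sqrt (qs b d)).
Proof. intros H. pose proof (qs_pos b d Hd H) as Hq. pose proof (sqrt_lt_R0 _ Hq).
  apply (conc_from_decr (T b d) (T1 b d)). intros x y z Hx Hy Hz; lra.
  intros; apply T_der; lra.
  apply (decr_from_d2 (T1 b d) (T2H b d) _ (-1)). intros x y z Hx Hy Hz; lra.
  intros; apply T1_cont; lra.
  intros y Hy Hne. split.
  apply (T1_der_reg (T1H b d) (T2H b d) 0 (y + 1)); auto; try lra.
  intros z Hz; apply T1_A; auto; lra. apply T1H_der; lra.
  apply T2H_neg; try lra. destruct (sqrt_rel (qs b d) y Hq ltac:(lra)) as [[E1 _] [E2 _]].
  destruct (Rtotal_order (1 / y ^ 2) (qs b d)) as [h|[h|h]]; auto.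
  apply E1 in h; lra. apply E2 in h; lra. Qed.

Lemma conv_part : b/2 < d -> strictly_convex_on (T b d) (fun a => 1 / sqrt (qs b d) < a).
Proof. intros H. pose proof (qs_pos b d Hd H) as Hq. pose proof (sqrt_lt_R0 _ Hq).
  assert (Hp : 0 < 1 / sqrt (qs b d)) by (apply Rdiv_lt_0_compat; lra).
  assert (C : strictly_concave_on (fun a => - T b d a) (fun a => 1 / sqrt (qs b d) < a)).
  { apply (conc_from_decr (fun a => - T b d a) (fun a => - T1 b d a)). intros x y z Hx Hy Hz; lra.
    intros; apply der_opp, T_der; lra.
    apply (decr_from_d2 (fun a => - T1 b d a) (fun a => - T2H b d a) _ (-1)). intros x y z Hx Hy Hz; lra.
    intros. apply cont_pt. apply (continuity_pt_opp (T1 b d)). apply cont_pt, T1_cont; lra.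
    intros y Hy Hne. split.
    apply der_opp. apply (T1_der_reg (T1H b d) (T2H b d) 0 (y + 1)); auto; try lra.
    intros z Hz; apply T1_A; auto; lra. apply T1H_der; lra.
    assert (0 < T2H b d y); [|lra]. apply T2H_pos; try lra.
    destruct (sqrt_rel (qs b d) y Hq ltac:(lra)) as [[_ E1] _]. apply E1; auto. }
  intros x y t Hx Hy Hxy Ht. specialize (C x y t Hx Hy Hxy Ht). simpl in C. lra. Qed.

End Fin2.

Theorem mainTheorem12 (b d : R) (hb : beta_c < b) (hd0 : 0 < d) (hd1 : d < b) :
  C1_on (T b d) (fun a => 0 < a) /\
  (d < b / 2 ->
     C2_on (T b d) (fun a => 0 < a /\ a <> 1 / sqrt (q_delta b d))) /\
  (b / 2 <= d -> C2_on (T b d) (fun a => 0 < a)) /\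
  (d <= b / 2 ->
     qstar_delta b d = 0 /\ strictly_concave_on (T b d) (fun a => 0 < a)) /\
  (b / 2 < d ->
     0 < qstar_delta b d /\
     strictly_concave_on (T b d) (fun a => 0 < a < 1 / sqrt (qstar_delta b d)) /\
     strictly_convex_on (T b d) (fun a => 1 / sqrt (qstar_delta b d) < a)).
Proof. assert (Hd : 0 < d < b) by lra.
  split; [apply C1; auto|].
  split.
  { intros H a [Ha Hne]. rewrite qdelta_eq in Hne by auto.
    pose proof (q0_pos b d Hd H). pose proof (sqrt_lt_R0 _ H0).
    assert (0 < 1 / sqrt (q0 b d)) by (apply Rdiv_lt_0_compat; lra).
    destruct (Rtotal_order a (1 / sqrt (q0 b d))) as [h|[h|h]]; [| contradiction |].
    - apply (C2_reg b d Hd (T1H b d) (T2H b d) 0 (1 / sqrt (q0 b d))); auto; try lra.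
      intros z Hz; apply T1_BH; auto; lra. intros; apply T1H_der; lra. apply T2H_cont; auto.
    - apply (C2_reg b d Hd (T1G b) (T2G b) (1 / sqrt (q0 b d)) (a + 1)); auto; try lra.
      intros z Hz; apply T1_BG; auto; lra. intros; apply (T1G_der b d Hd); lra. apply (T2G_cont b d Hd); auto. }
  split.
  { intros H a Ha. apply (C2_reg b d Hd (T1H b d) (T2H b d) 0 (a + 1)); auto; try lra.
    intros z Hz; apply T1_A; auto; lra. intros; apply T1H_der; lra. apply T2H_cont; auto. }
  split.
  { intros H. split. apply qstar_0; auto. apply conc_all; auto. }
  intros H. rewrite qstar_qs by auto. split. apply qs_pos; auto. split.
  apply conc_part; auto. apply conv_part; auto. Qed.
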